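(* For the linear control system $\Sigma$ the following hold. 1. If $\alpha=a\alpha+b\beta=0$, there is $\varepsilon>0$ such that for every $x\in(1-\varepsilon,1+\varepsilon)$ the vertical line $\{x\}\times\mathbb{R}$ is a control set. 2. If $\alpha=0$ and $a\alpha+b\beta\neq0$, then for every $x>0$, $\Sigma$ has a control set of the form $\{x\}\times I_x$, where $I_x\subset\mathbb{R}$ is a bounded interval with nonempty interior containing $-ab^{-1}(x-1)$. In particular the control sets are vertical segments meeting the line $\{(x,y)\in G: y=-ab^{-1}(x-1)\}$. 3. If $\alpha\neq0$ and $a\alpha+b\beta=0$, then $\Sigma$ has exactly one control set, namely $\{(x,y)\in G: y=\beta\alpha^{-1}(x-1)\}$. 4. If $\alpha(a\alpha+b\beta)\neq0$ and $b=0$, then the unique control set of $\Sigma$ is $G$. 5. If $\alpha(a\alpha+b\beta)\neq0$ and $b\neq0$, then $\Sigma$ has a unique control set $\mathcal C$. It is a cone with vertex $(0,ab^{-1})$: its interior is an open angular sector $\{(0,ab^{-1})+sv_1+tv_2: s,t>0\}$, with $v_1,v_2\in\mathbb{R}^2$ linearly independent, contained in $\{(x,y):x>0\}$.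
   Context: Let $G=\{(x,y)\in\mathbb{R}^2:x>0\}$, a Lie group with product $(x_1,y_1)\cdot(x_2,y_2)=(x_1x_2,y_2+x_2y_1)$. Fix $\Omega=[u_*,u^*]$ with $u_*<0<u^*$. The admissible controls $\mathcal U$ are the piecewise constant functions $\mathbb{R}\to\Omega$. The system is $\Sigma$: $\dot x=u\alpha x$, $\dot y=a(x-1)+by+ux\beta$, with $(a,b),(\alpha,\beta)\in\mathbb{R}^2\setminus\{(0,0)\}$. We write $\varphi(t,p,u)$ for its solutions and $\mathcal O^+(p)=\{\varphi(t,p,u):t\ge0,u\in\mathcal U\}$; closures are taken in $G$. A control set is a subset $\mathcal C\subset G$ that is maximal with respect to inclusion among the sets satisfying both of the following: (i) every $p\in\mathcal C$ admits $u\in\mathcal U$ with $\varphi(t,p,u)\in\mathcal C$ for all $t\ge0$; (ii) $\mathcal C\subset\operatorname{cl}\mathcal O^+(p)$ for all $p\in\mathcal C$. *)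

(* Defs.v *)
From Stdlib Require Import Reals Lra List.
Open Scope R_scope.

(* Points of G are pairs (x,y) : R*R with x > 0. Sets are predicates on R*R. *)
Definition pt := (R * R)%type.
Definition inG (p : pt) : Prop := 0 < fst p.

Definition locally_const (u : R -> R) (t : R) : Prop :=
  exists d, 0 < d /\ forall s, Rabs (s - t) < d -> u s = u t.

(* Admissible controls: piecewise constant functions R -> [umin, umax]:
   on every compact interval u is locally constant except at finitely many points. *)
Definition admissible (umin umax : R) (u : R -> R) : Prop :=
  (forall t, umin <= u t <= umax) /\
  (forall T, exists l : list R, forall t, -T <= t <= T -> ~ In t l -> locally_const u t).

(* gam is the solution phi(., p, u) of
     x' = u alpha x,  y' = a (x - 1) + b y + u x beta,   gam 0 = p :
   continuous, and satisfying the ODE at every point where u is locally constant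
   (i.e. away from the switching times). *)
Definition is_solution (a b al be : R) (u : R -> R) (p : pt) (gam : R -> pt) : Prop :=
  gam 0 = p /\
  (forall t, continuity_pt (fun s => fst (gam s)) t /\ continuity_pt (fun s => snd (gam s)) t) /\
  (forall t, locally_const u t ->
     derivable_pt_lim (fun s => fst (gam s)) t (u t * al * fst (gam t)) /\
     derivable_pt_lim (fun s => snd (gam s)) t
        (a * (fst (gam t) - 1) + b * snd (gam t) + u t * fst (gam t) * be)).

Definition orbit_plus (a b al be umin umax : R) (p : pt) (q : pt) : Prop :=
  exists u gam t, admissible umin umax u /\ is_solution a b al be u p gam /\
                  0 <= t /\ gam t = q.

Definition dist2 (p q : pt) : R :=
  sqrt ((fst p - fst q)^2 + (snd p - snd q)^2).

Definition closureG (S : pt -> Prop) (q : pt) : Prop :=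
  inG q /\ forall e, 0 < e -> exists s, S s /\ dist2 s q < e.

Definition interior2 (S : pt -> Prop) (q : pt) : Prop :=
  exists r, 0 < r /\ forall s, dist2 s q < r -> S s.

Definition set_eq (S T : pt -> Prop) : Prop := forall p, S p <-> T p.

(* conditions (i) and (ii) of the definition of control set (C a subset of G) *)
Definition pre_control_set (a b al be umin umax : R) (C : pt -> Prop) : Prop :=
  (forall p, C p -> inG p) /\
  (forall p, C p -> exists u gam, admissible umin umax u /\ is_solution a b al be u p gam /\
                     forall t, 0 <= t -> C (gam t)) /\
  (forall p, C p -> forall q, C q -> closureG (orbit_plus a b al be umin umax p) q).

Definition is_control_set (a b al be umin umax : R) (C : pt -> Prop) : Prop :=
  pre_control_set a b al be umin umax C /\
  forall D, pre_control_set a b al be umin umax D ->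
            (forall p, C p -> D p) -> (forall p, D p -> C p).

Definition is_interval (I : R -> Prop) : Prop :=
  forall y1 y2 y, I y1 -> I y2 -> y1 <= y <= y2 -> I y.

(* Main.v *)
Require Import Defs.
From Stdlib Require Import Reals Lra List Classical FunctionalExtensionality.
From Coquelicot Require Import Coquelicot.
Open Scope R_scope.

Lemma MVT_open (f D : R -> R) (a b : R) : a < b ->
  (forall c, a < c < b -> derivable_pt_lim f c (D c)) ->
  (forall c, a <= c <= b -> continuity_pt f c) ->
  exists c, a < c < b /\ f b - f a = D c * (b - a).
Proof.
  intros hab hd hc.
  pose (pr1 := fun c (P : a < c < b) => exist (fun l => derivable_pt_abs f c l) (D c) (hd c P)).
  destruct (MVT f id a b pr1 (fun c _ => derivable_pt_id c) hab hc
     (fun c _ => derivable_continuous_pt _ _ (derivable_pt_id c))) as [c [P E]].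
  exists c; split; [exact P|].
  simpl in E. rewrite derive_pt_id in E. unfold id in E. lra.
Qed.

Lemma mono_list (f : R -> R) (l : list R) : forall s t, s <= t ->
  (forall x, s <= x <= t -> continuity_pt f x) ->
  (forall x, s < x < t -> ~ In x l -> exists d, derivable_pt_lim f x d /\ 0 <= d) ->
  f s <= f t.
Proof.
  induction l as [|c l IH]; intros s t hst hc hd.
  - destruct (Req_dec s t) as [->|hne]; [lra|].
    assert (hD : forall x, s < x < t -> derivable_pt_lim f x (Derive f x)).
    { intros x hx. destruct (hd x hx (fun h => h)) as [d [h1 _]].
      apply is_derive_Reals. replace (Derive f x) with d. apply is_derive_Reals; auto.
      symmetry. apply is_derive_unique. apply is_derive_Reals; auto. }
    destruct (MVT_open f (Derive f) s t) as [c [hc1 hc2]]; auto; try lra.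
    destruct (hd c hc1 (fun h => h)) as [d [h1 h2]].
    assert (Derive f c = d). { apply is_derive_unique. apply is_derive_Reals; auto. }
    assert (0 <= Derive f c * (t - s)) by (apply Rmult_le_pos; lra). lra.
  - destruct (classic (s < c < t)) as [hin|hout].
    + apply Rle_trans with (f c).
      * apply IH; try lra. intros; apply hc; lra.
        intros x hx hnl. apply hd; [lra|]. intros [e|e]; [lra|tauto].
      * apply IH; try lra. intros; apply hc; lra.
        intros x hx hnl. apply hd; [lra|]. intros [e|e]; [lra|tauto].
    + apply IH; auto. intros x hx hnl. apply hd; auto. intros [e|e]; [subst; tauto|tauto].
Qed.

Lemma mono_sol (f u : R -> R) umin umax (P : R -> Prop) :
  admissible umin umax u ->
  (forall x, continuity_pt f x) ->
  (forall x, P x -> locally_const u x -> exists d, derivable_pt_lim f x d /\ 0 <= d) ->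
  forall s t, s <= t -> (forall x, s < x < t -> P x) -> f s <= f t.
Proof.
  intros [_ hu] hc hd s t hst hP.
  destruct (hu (Rabs s + Rabs t)) as [l hl].
  apply (mono_list f l s t hst (fun x _ => hc x)).
  intros x hx hn. apply hd. apply hP; auto. apply hl; auto.
  split; [| ]; unfold Rabs; destruct (Rcase_abs s); destruct (Rcase_abs t); lra.
Qed.

Lemma cont_eps (f : R -> R) x : continuity_pt f x <->
  (forall eps, 0 < eps -> exists del, 0 < del /\ forall y, Rabs (y - x) < del -> Rabs (f y - f x) < eps).
Proof.
  unfold continuity_pt, continue_in, limit1_in, limit_in. simpl. unfold R_dist, D_x, no_cond.
  split; intros H eps he; destruct (H eps he) as [del [hd H']]; exists del; split; auto.
  - intros y hy. destruct (Req_dec y x) as [->|hne].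
    + rewrite Rminus_eq_0, Rabs_R0; lra.
    + apply H'; split; auto.
  - intros y [_ hy]. apply H'; auto.
Qed.

Lemma deriv_local f g t l d : 0 < d -> (forall s, Rabs (s - t) < d -> f s = g s) ->
  derivable_pt_lim g t l -> derivable_pt_lim f t l.
Proof.
  intros hd he hg eps heps. destruct (hg eps heps) as [del hdel].
  assert (hm : 0 < Rmin del d) by (apply Rmin_pos; [apply cond_pos|auto]).
  exists (mkposreal _ hm). intros h hh0 hh. simpl in hh.
  rewrite (he (t + h)), (he t).
  - apply hdel; auto. apply Rlt_le_trans with (1 := hh). apply Rmin_l.
  - rewrite Rminus_eq_0, Rabs_R0; auto.
  - replace (t + h - t) with h by ring. apply Rlt_le_trans with (1 := hh). apply Rmin_r.
Qed.

Lemma deriv_shift f t T l : derivable_pt_lim f (t - T) l -> derivable_pt_lim (fun s => f (s - T)) t l.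
Proof.
  intros hf eps heps. destruct (hf eps heps) as [del hdel]. exists del.
  intros h h0 hh. replace (t + h - T) with (t - T + h) by ring. apply hdel; auto.
Qed.

Lemma right_deriv (f D : R -> R) T d : 0 < d ->
  (forall s, T <= s <= T + d -> continuity_pt f s) ->
  (forall s, T < s < T + d -> derivable_pt_lim f s (D s)) ->
  continuity_pt D T ->
  forall eps, 0 < eps -> exists del, 0 < del /\ forall h, 0 < h < del -> Rabs ((f (T + h) - f T)/h - D T) < eps.
Proof.
  intros hd hc hder hD eps heps.
  destruct (proj1 (cont_eps D T) hD eps heps) as [del0 [hdel0 H0]].
  exists (Rmin del0 d). split; [apply Rmin_pos; auto|].
  intros h [h1 h2].
  assert (h2a : h < del0) by (apply Rlt_le_trans with (1 := h2); apply Rmin_l).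
  assert (h2b : h < d) by (apply Rlt_le_trans with (1 := h2); apply Rmin_r).
  destruct (MVT_open f D T (T + h)) as [c [hc1 hc2]]; try lra.
  - intros; apply hder; lra.
  - intros; apply hc; lra.
  - replace ((f (T + h) - f T) / h) with (D c).
    + apply H0. rewrite Rabs_right; lra.
    + rewrite hc2. field. lra.
Qed.

Lemma left_deriv (f D : R -> R) T d : 0 < d ->
  (forall s, T - d <= s <= T -> continuity_pt f s) ->
  (forall s, T - d < s < T -> derivable_pt_lim f s (D s)) ->
  continuity_pt D T ->
  forall eps, 0 < eps -> exists del, 0 < del /\ forall h, -del < h < 0 -> Rabs ((f (T + h) - f T)/h - D T) < eps.
Proof.
  intros hd hc hder hD eps heps.
  destruct (proj1 (cont_eps D T) hD eps heps) as [del0 [hdel0 H0]].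
  exists (Rmin del0 d). split; [apply Rmin_pos; auto|].
  intros h [h1 h2].
  assert (h2a : - h < del0) by (apply Rlt_le_trans with (Rmin del0 d); [lra|apply Rmin_l]).
  assert (h2b : - h < d) by (apply Rlt_le_trans with (Rmin del0 d); [lra|apply Rmin_r]).
  destruct (MVT_open f D (T + h) T) as [c [hc1 hc2]]; try lra.
  - intros; apply hder; lra.
  - intros; apply hc; lra.
  - replace ((f (T + h) - f T) / h) with (D c).
    + apply H0. rewrite Rabs_left; lra.
    + field_simplify_eq; [|lra]. replace (T - (T + h)) with (-h) in hc2 by ring. lra.
Qed.

Lemma deriv_two_sided (f : R -> R) T l :
  (forall eps, 0<eps -> exists del, 0<del /\ forall h, 0<h<del -> Rabs ((f (T+h) - f T)/h - l) < eps) ->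
  (forall eps, 0<eps -> exists del, 0<del /\ forall h, -del<h<0 -> Rabs ((f (T+h) - f T)/h - l) < eps) ->
  derivable_pt_lim f T l.
Proof.
  intros hr hl eps heps.
  destruct (hr eps heps) as [d1 [hd1 H1]]. destruct (hl eps heps) as [d2 [hd2 H2]].
  assert (hm : 0 < Rmin d1 d2) by (apply Rmin_pos; auto).
  exists (mkposreal _ hm). intros h hh0 hh. simpl in hh.
  apply Rabs_def2 in hh. destruct hh as [ha hb].
  assert (Rmin d1 d2 <= d1) by apply Rmin_l. assert (Rmin d1 d2 <= d2) by apply Rmin_r.
  destruct (Rlt_or_le 0 h).
  - apply H1; lra.
  - apply H2; split; [lra|]. destruct (Rle_lt_or_eq_dec h 0); auto; contradiction.
Qed.

Definition glf {A : Type} (f1 f2 : R -> A) T t := if Rlt_dec t T then f1 t else f2 (t - T).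

Lemma glue_cont (f1 f2 : R -> R) T : (forall t, continuity_pt f1 t) -> (forall t, continuity_pt f2 t) -> f1 T = f2 0 ->
  forall t, continuity_pt (glf f1 f2 T) t.
Proof.
  intros h1 h2 hT t. apply cont_eps. intros eps heps. unfold glf.
  destruct (Rlt_dec t T) as [lt|nlt].
  - destruct (proj1 (cont_eps _ _) (h1 t) eps heps) as [d [hd H]].
    exists (Rmin d (T - t)). split; [apply Rmin_pos; lra|].
    intros y hy. assert (Rmin d (T - t) <= d) by apply Rmin_l. assert (Rmin d (T - t) <= T - t) by apply Rmin_r.
    apply Rabs_def2 in hy as [ya yb].
    destruct (Rlt_dec y T); [|lra]. apply H. apply Rabs_def1; lra.
  - destruct (Req_dec t T) as [->|ne].
    + destruct (proj1 (cont_eps _ _) (h1 T) eps heps) as [d1 [hd1 H1]].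
      destruct (proj1 (cont_eps _ _) (h2 0) eps heps) as [d2 [hd2 H2]].
      exists (Rmin d1 d2). split; [apply Rmin_pos; lra|].
      intros y hy. assert (Rmin d1 d2 <= d1) by apply Rmin_l. assert (Rmin d1 d2 <= d2) by apply Rmin_r.
      apply Rabs_def2 in hy as [ya yb]. rewrite Rminus_eq_0.
      destruct (Rlt_dec y T).
      * rewrite <- hT. apply H1. apply Rabs_def1; lra.
      * apply H2. apply Rabs_def1; lra.
    + destruct (proj1 (cont_eps _ _) (h2 (t - T)) eps heps) as [d [hd H]].
      exists (Rmin d (t - T)). split; [apply Rmin_pos; lra|].
      intros y hy. assert (Rmin d (t - T) <= d) by apply Rmin_l. assert (Rmin d (t - T) <= t - T) by apply Rmin_r.
      apply Rabs_def2 in hy as [ya yb].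
      destruct (Rlt_dec y T); [lra|]. apply H. apply Rabs_def1; lra.
Qed.

Lemma cont_comp_sol_fst (g : R -> pt) t : continuity_pt (fun s => fst (g s)) t -> continuity_pt (fun s => fst (g s)) t.
Proof. auto. Qed.

Lemma F2_cont a b be v (g : R -> pt) t :
  continuity_pt (fun s => fst (g s)) t -> continuity_pt (fun s => snd (g s)) t ->
  continuity_pt (fun s => a * (fst (g s) - 1) + b * snd (g s) + v * fst (g s) * be) t.
Proof.
  intros hx hy.
  apply continuity_pt_plus; [apply continuity_pt_plus|].
  - apply continuity_pt_mult; [apply continuity_pt_const; intros ? ?; auto|].
    apply continuity_pt_minus; auto. apply continuity_pt_const; intros ? ?; auto.
  - apply continuity_pt_mult; [apply continuity_pt_const; intros ? ?; auto|auto].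
  - apply continuity_pt_mult; [apply continuity_pt_mult|]; auto; apply continuity_pt_const; intros ? ?; auto.
Qed.

Lemma F1_cont al v (g : R -> pt) t :
  continuity_pt (fun s => fst (g s)) t -> continuity_pt (fun s => v * al * fst (g s)) t.
Proof.
  intros hx. apply continuity_pt_mult; auto. apply continuity_pt_const; intros ? ?; auto.
Qed.

Lemma glue_sol a b al be umin umax u1 u2 g1 g2 p T :
  0 <= T -> admissible umin umax u1 -> admissible umin umax u2 ->
  is_solution a b al be u1 p g1 -> is_solution a b al be u2 (g1 T) g2 ->
  admissible umin umax (glf u1 u2 T) /\ is_solution a b al be (glf u1 u2 T) p (glf g1 g2 T).
Proof.
  intros hT [hv1 hp1] [hv2 hp2] [h01 [hc1 hd1]] [h02 [hc2 hd2]].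
  split; [split|].
  - intros t. unfold glf. destruct (Rlt_dec t T); auto.
  - intros Tb. destruct (hp1 Tb) as [l1 hl1]. destruct (hp2 (Tb + Rabs T)) as [l2 hl2].
    exists (T :: l1 ++ map (fun z => z + T) l2). intros t ht hn.
    assert (tne : t <> T) by (intro e; apply hn; left; auto).
    destruct (Rlt_or_le t T) as [lt|le].
    + destruct (hl1 t ht) as [d [hd H]].
      { intro i; apply hn; right; apply in_or_app; left; auto. }
      exists (Rmin d (T - t)). split; [apply Rmin_pos; lra|].
      intros s hs. assert (Rmin d (T - t) <= d) by apply Rmin_l. assert (Rmin d (T - t) <= T - t) by apply Rmin_r.
      apply Rabs_def2 in hs as [sa sb]. unfold glf.
      destruct (Rlt_dec s T); [|lra]. destruct (Rlt_dec t T); [|lra]. apply H. apply Rabs_def1; lra.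
    + assert (lt : T < t) by lra.
      destruct (hl2 (t - T)) as [d [hd H]].
      { split; unfold Rabs in *; destruct (Rcase_abs T); lra. }
      { intro i; apply hn; right; apply in_or_app; right. replace t with (t - T + T) by ring.
        apply in_map with (f := fun z => z + T); auto. }
      exists (Rmin d (t - T)). split; [apply Rmin_pos; lra|].
      intros s hs. assert (Rmin d (t - T) <= d) by apply Rmin_l. assert (Rmin d (t - T) <= t - T) by apply Rmin_r.
      apply Rabs_def2 in hs as [sa sb]. unfold glf.
      destruct (Rlt_dec s T); [lra|]. destruct (Rlt_dec t T); [lra|]. apply H. apply Rabs_def1; lra.
  - split; [|split].
    + unfold glf. destruct (Rlt_dec 0 T); auto. assert (T = 0) by lra. subst.
      rewrite Rminus_0_r. rewrite h02. auto.
    + intros t.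
      assert (ex : forall (pr : pt -> R), (fun s => pr (glf g1 g2 T s)) = glf (fun s => pr (g1 s)) (fun s => pr (g2 s)) T).
      { intros pr. apply functional_extensionality. intros s. unfold glf. destruct (Rlt_dec s T); auto. }
      rewrite !ex. split; apply glue_cont; try (intros; apply hc1); try (intros; apply hc2); rewrite h02; auto.
    + intros t [d [hd hlc]].
      destruct (Rlt_or_le t T) as [lt|le].
      *
        assert (hlc1 : locally_const u1 t).
        { exists (Rmin d (T - t)). split; [apply Rmin_pos; lra|].
          intros s hs. assert (Rmin d (T - t) <= d) by apply Rmin_l. assert (Rmin d (T - t) <= T - t) by apply Rmin_r.
          apply Rabs_def2 in hs as [sa sb].
          assert (E1 := hlc s ltac:(apply Rabs_def1; lra)). unfold glf in E1.
          destruct (Rlt_dec s T); [|lra]. destruct (Rlt_dec t T); [|lra]. auto. }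
        destruct (hd1 t hlc1) as [D1 D2].
        assert (eqg : forall s, Rabs (s - t) < T - t -> glf g1 g2 T s = g1 s).
        { intros s hs. apply Rabs_def2 in hs. unfold glf. destruct (Rlt_dec s T); auto; lra. }
        assert (equ : glf u1 u2 T t = u1 t) by (unfold glf; destruct (Rlt_dec t T); auto; lra).
        rewrite equ, (eqg t) by (rewrite Rminus_eq_0, Rabs_R0; lra).
        split; eapply deriv_local with (d := T - t); try lra; try (intros s hs; rewrite (eqg s hs); reflexivity); eauto.
      * destruct (Rle_lt_or_eq_dec _ _ le) as [lt|eq].
        -- assert (hlc2 : locally_const u2 (t - T)).
           { exists (Rmin d (t - T)). split; [apply Rmin_pos; lra|].
             intros s hs. assert (Rmin d (t - T) <= d) by apply Rmin_l. assert (Rmin d (t - T) <= t - T) by apply Rmin_r.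
             apply Rabs_def2 in hs as [sa sb].
             assert (E1 := hlc (s + T) ltac:(apply Rabs_def1; lra)). unfold glf in E1.
             destruct (Rlt_dec (s + T) T); [lra|]. destruct (Rlt_dec t T); [lra|].
             replace (s + T - T) with s in E1 by ring. auto. }
           destruct (hd2 (t - T) hlc2) as [D1 D2].
           assert (eqg : forall s, Rabs (s - t) < t - T -> glf g1 g2 T s = g2 (s - T)).
           { intros s hs. apply Rabs_def2 in hs. unfold glf. destruct (Rlt_dec s T); auto; lra. }
           assert (equ : glf u1 u2 T t = u2 (t - T)) by (unfold glf; destruct (Rlt_dec t T); auto; lra).
           rewrite equ, (eqg t) by (rewrite Rminus_eq_0, Rabs_R0; lra).
           split; eapply deriv_local with (d := t - T); try lra;
             try (intros s hs; rewrite (eqg s hs); reflexivity);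
             apply (deriv_shift (fun s => _ (g2 s))); auto.
        -- subst t. set (v := glf u1 u2 T T).
           assert (hv : v = u2 0) by (unfold v, glf; destruct (Rlt_dec T T); [lra|]; rewrite Rminus_eq_0; auto).
           assert (hl1 : forall s, T - d < s < T -> locally_const u1 s /\ u1 s = v).
           { intros s hs. assert (Es : u1 s = v).
             { assert (E1 := hlc s ltac:(apply Rabs_def1; lra)). unfold glf in E1. fold v in E1.
               destruct (Rlt_dec s T); [auto|lra]. }
             split; auto. exists (Rmin (s - (T - d)) (T - s)). split; [apply Rmin_pos; lra|].
             intros s' hs'. assert (Rmin (s - (T - d)) (T - s) <= s - (T - d)) by apply Rmin_l.
             assert (Rmin (s - (T - d)) (T - s) <= T - s) by apply Rmin_r.
             apply Rabs_def2 in hs' as [sa sb]. rewrite Es.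
             assert (E1 := hlc s' ltac:(apply Rabs_def1; lra)). unfold glf in E1. fold v in E1.
             destruct (Rlt_dec s' T); [auto|lra]. }
           assert (hl2 : forall s, 0 < s < d -> locally_const u2 s /\ u2 s = v).
           { intros s hs. assert (Es : u2 s = v).
             { assert (E1 := hlc (s + T) ltac:(apply Rabs_def1; lra)). unfold glf in E1. fold v in E1.
               destruct (Rlt_dec (s + T) T); [lra|]. replace (s + T - T) with s in E1 by ring. auto. }
             split; auto. exists (Rmin s (d - s)). split; [apply Rmin_pos; lra|].
             intros s' hs'. assert (Rmin s (d - s) <= s) by apply Rmin_l.
             assert (Rmin s (d - s) <= d - s) by apply Rmin_r.
             apply Rabs_def2 in hs' as [sa sb]. rewrite Es.
             assert (E1 := hlc (s' + T) ltac:(apply Rabs_def1; lra)). unfold glf in E1. fold v in E1.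
             destruct (Rlt_dec (s' + T) T); [lra|]. replace (s' + T - T) with s' in E1 by ring. auto. }
           assert (eqT : glf g1 g2 T T = g1 T) by (unfold glf; destruct (Rlt_dec T T); [lra|]; rewrite Rminus_eq_0; auto).
           assert (eqR : forall h, 0 < h -> glf g1 g2 T (T + h) = g2 h)
             by (intros h hh; unfold glf; destruct (Rlt_dec (T + h) T); [lra|]; f_equal; ring).
           assert (eqL : forall h, h < 0 -> glf g1 g2 T (T + h) = g1 (T + h))
             by (intros h hh; unfold glf; destruct (Rlt_dec (T + h) T); [auto|lra]).
           rewrite eqT. fold v.
           split; apply deriv_two_sided.
           ++ intros eps heps.
              destruct (right_deriv (fun s => fst (g2 s)) (fun s => v * al * fst (g2 s)) 0 d hd
                 (fun s _ => proj1 (hc2 s)) ltac:(intros s hs; destruct (hl2 s ltac:(lra)) as [A1 A2];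
                     rewrite <- A2; apply (hd2 s A1)) (F1_cont al v g2 0 (proj1 (hc2 0))) eps heps) as [del [hdl H]].
              exists del. split; auto. intros h hh. specialize (H h hh). cbv beta in H. rewrite Rplus_0_l in H.
              rewrite eqR by lra. rewrite eqT, <- h02. exact H.
           ++ intros eps heps.
              destruct (left_deriv (fun s => fst (g1 s)) (fun s => v * al * fst (g1 s)) T d hd
                 (fun s _ => proj1 (hc1 s)) ltac:(intros s hs; destruct (hl1 s ltac:(lra)) as [A1 A2];
                     rewrite <- A2; apply (hd1 s A1)) (F1_cont al v g1 T (proj1 (hc1 T))) eps heps) as [del [hdl H]].
              exists del. split; auto. intros h hh. specialize (H h hh). cbv beta in H.
              rewrite eqL by lra. rewrite eqT. exact H.
           ++ intros eps heps.
              destruct (right_deriv (fun s => snd (g2 s)) (fun s => a * (fst (g2 s) - 1) + b * snd (g2 s) + v * fst (g2 s) * be) 0 d hd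
                 (fun s _ => proj2 (hc2 s)) ltac:(intros s hs; destruct (hl2 s ltac:(lra)) as [A1 A2];
                     rewrite <- A2; apply (hd2 s A1)) (F2_cont a b be v g2 0 (proj1 (hc2 0)) (proj2 (hc2 0))) eps heps) as [del [hdl H]].
              exists del. split; auto. intros h hh. specialize (H h hh). cbv beta in H. rewrite Rplus_0_l in H.
              rewrite eqR by lra. rewrite eqT, <- h02. exact H.
           ++ intros eps heps.
              destruct (left_deriv (fun s => snd (g1 s)) (fun s => a * (fst (g1 s) - 1) + b * snd (g1 s) + v * fst (g1 s) * be) T d hd
                 (fun s _ => proj2 (hc1 s)) ltac:(intros s hs; destruct (hl1 s ltac:(lra)) as [A1 A2];
                     rewrite <- A2; apply (hd1 s A1)) (F2_cont a b be v g1 T (proj1 (hc1 T)) (proj2 (hc1 T))) eps heps) as [del [hdl H]].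
              exists del. split; auto. intros h hh. specialize (H h hh). cbv beta in H.
              rewrite eqL by lra. rewrite eqT. exact H.
Qed.

Lemma orbit_trans a b al be umin umax p q r :
  orbit_plus a b al be umin umax p q -> orbit_plus a b al be umin umax q r -> orbit_plus a b al be umin umax p r.
Proof.
  intros [u1 [g1 [t1 [ha1 [hs1 [ht1 e1]]]]]] [u2 [g2 [t2 [ha2 [hs2 [ht2 e2]]]]]].
  subst q. destruct (glue_sol a b al be umin umax u1 u2 g1 g2 p t1 ht1 ha1 ha2 hs1 hs2) as [A S].
  exists (glf u1 u2 t1), (glf g1 g2 t1), (t1 + t2). split; [exact A|split; [exact S|split; [lra|]]].
  unfold glf. destruct (Rlt_dec (t1 + t2) t1); [lra|]. replace (t1 + t2 - t1) with t2 by ring. auto.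
Qed.

Lemma orbit_refl a b al be umin umax p u g : admissible umin umax u -> is_solution a b al be u p g ->
  orbit_plus a b al be umin umax p p.
Proof. intros ha hs. exists u, g, 0. split; [exact ha|split; [exact hs|split; [lra|]]]. destruct hs; auto. Qed.

Lemma const_sol a b al be umin umax v p (X Y : R -> R) :
  umin <= v <= umax -> X 0 = fst p -> Y 0 = snd p ->
  (forall t, is_derive X t (v * al * X t)) ->
  (forall t, is_derive Y t (a * (X t - 1) + b * Y t + v * X t * be)) ->
  admissible umin umax (fun _ => v) /\ is_solution a b al be (fun _ => v) p (fun t => (X t, Y t)).
Proof.
  intros hv hx0 hy0 hX hY. split; [split|].
  - intros; auto.
  - intros T. exists nil. intros t _ _. exists 1. split; [lra|auto].
  - split; [|split].
    + destruct p; simpl in *; subst; auto.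
    + intros t; simpl; split.
      * apply derivable_continuous_pt. exists (v * al * X t). apply is_derive_Reals, hX.
      * apply derivable_continuous_pt. eexists. apply is_derive_Reals, hY.
    + intros t _; simpl; split; apply is_derive_Reals; auto.
Qed.

Lemma const_orbit a b al be umin umax v p (X Y : R -> R) :
  umin <= v <= umax -> X 0 = fst p -> Y 0 = snd p ->
  (forall t, is_derive X t (v * al * X t)) ->
  (forall t, is_derive Y t (a * (X t - 1) + b * Y t + v * X t * be)) ->
  forall t, 0 <= t -> orbit_plus a b al be umin umax p (X t, Y t).
Proof.
  intros hv hx hy hX hY t ht. destruct (const_sol a b al be umin umax v p X Y) as [A S]; auto.
  exists (fun _ => v), (fun t => (X t, Y t)), t. split; [exact A|split; [exact S|split; [lra|reflexivity]]].
Qed.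

Lemma sol_deriv a b al be u p g t : is_solution a b al be u p g -> locally_const u t ->
  is_derive (fun s => fst (g s)) t (u t * al * fst (g t)) /\
  is_derive (fun s => snd (g s)) t (a * (fst (g t) - 1) + b * snd (g t) + u t * fst (g t) * be).
Proof. intros [_ [_ hd]] hl. destruct (hd t hl). split; apply is_derive_Reals; auto. Qed.

Ltac rwD X H := match type of H with is_derive _ ?x ?v =>
   replace (Derive (fun y : R => X y) x) with v by (symmetry; apply is_derive_unique; exact H) end.
Ltac dsolve1 X H := auto_derive; [repeat split; try (eexists; eassumption); auto | try rwD X H].
Ltac dsolve2 X H Y H' := auto_derive; [repeat split; try (eexists; eassumption); auto |
   try rwD X H; try rwD Y H'].

Lemma cont_fst a b al be u p g : is_solution a b al be u p g -> forall t, continuity_pt (fun s => fst (g s)) t.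
Proof. intros [_ [hc _]] t. apply hc. Qed.
Lemma cont_snd a b al be u p g : is_solution a b al be u p g -> forall t, continuity_pt (fun s => snd (g s)) t.
Proof. intros [_ [hc _]] t. apply hc. Qed.

Definition wmin al umin umax := Rmin (al * umin) (al * umax).
Definition wmax al umin umax := Rmax (al * umin) (al * umax).

Lemma w_bounds al umin umax v : umin <= v <= umax -> wmin al umin umax <= v * al <= wmax al umin umax.
Proof.
  intros [h1 h2]. unfold wmin, wmax, Rmin, Rmax.
  destruct (Rle_dec (al * umin) (al * umax)); destruct (Rle_lt_dec 0 al); split; nra.
Qed.

Lemma x_pos a b al be umin umax u p g : admissible umin umax u -> is_solution a b al be u p g ->
  0 < fst p -> forall t, 0 <= t -> fst p * exp (wmin al umin umax * t) <= fst (g t) /\ 0 < fst (g t).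
Proof.
  intros ha hs hp.
  set (m := wmin al umin umax).
  assert (Hsq : forall t, 0 <= t -> (fst p * exp (m * t))^2 <= (fst (g t))^2).
  { intros t ht.
    assert (M := mono_sol (fun s => (fst (g s))^2 * exp (- 2 * m * s)) u umin umax (fun _ => True) ha).
    assert (M1 : (fst (g 0))^2 * exp (-2 * m * 0) <= (fst (g t))^2 * exp (-2 * m * t)).
    { apply M; auto.
      - intros x. apply continuity_pt_mult.
        + apply continuity_pt_mult; [apply (cont_fst _ _ _ _ _ _ _ hs)|].
          apply continuity_pt_mult; [apply (cont_fst _ _ _ _ _ _ _ hs)|apply continuity_pt_const; intros ? ?; auto].
        + apply derivable_continuous_pt. apply derivable_pt_comp; [|apply derivable_pt_exp].
          apply derivable_pt_scal, derivable_pt_id.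
      - intros x _ hl. destruct (sol_deriv _ _ _ _ _ _ _ x hs hl) as [hx _].
        exists (2 * fst (g x) * (u x * al * fst (g x)) * exp (-2 * m * x) - 2 * m * (fst (g x))^2 * exp (-2 * m * x)). split.
        + apply is_derive_Reals.
          assert (G : forall (X : R -> R) dx, is_derive X x dx -> is_derive (fun s => (X s)^2 * exp (-2 * m * s)) x
             (2 * X x * dx * exp (-2 * m * x) - 2 * m * (X x)^2 * exp (-2 * m * x))).
          { intros X dx hX. dsolve1 X hX. ring. }
          apply (G (fun s => fst (g s))). exact hx.
        + destruct ha as [hv _]. assert (W := w_bounds al umin umax (u x) (hv x)). fold m in W.
          assert (0 <= (fst (g x))^2) by nra. assert (0 < exp (-2 * m * x)) by apply exp_pos.
          replace (2 * fst (g x) * (u x * al * fst (g x)) * exp (-2 * m * x) - 2 * m * fst (g x) ^ 2 * exp (-2 * m * x))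
            with (2 * (fst (g x))^2 * exp (-2 * m * x) * (u x * al - m)) by ring.
          apply Rmult_le_pos; [|lra]. nra. }
    destruct hs as [h0 _]. rewrite h0 in M1. rewrite Rmult_0_r, exp_0, Rmult_1_r in M1.
    assert (E : exp (-2 * m * t) * (exp (m * t) * exp (m * t)) = 1).
    { rewrite <- !exp_plus. replace (-2*m*t + (m*t + m*t)) with 0 by ring. apply exp_0. }
    assert (0 < exp (m * t)) by apply exp_pos.
    replace ((fst p * exp (m * t))^2) with (fst p ^ 2 * exp (m*t)^2) by ring.
    assert (0 < exp (m*t)^2) by nra. 
    apply Rmult_le_reg_r with (exp (-2 * m * t)); [apply exp_pos|]. nra. }
  assert (Hpos : forall t, 0 <= t -> 0 < fst (g t)).
  { intros t ht. destruct (Rlt_or_le 0 (fst (g t))) as [h|h]; auto. exfalso.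
    assert (hne : fst (g t) <> 0 -> False).
    { intros hne. assert (hlt : fst (g t) < 0) by lra.
      destruct (IVT (fun s => - fst (g s)) 0 t) as [z [hz1 hz2]].
      - intros x. apply continuity_pt_opp. apply (cont_fst _ _ _ _ _ _ _ hs).
      - destruct (Rle_lt_or_eq_dec 0 t ht) as [|e]; [lra|subst; destruct hs as [h0 _]; rewrite h0 in hlt; lra].
      - destruct hs as [h0 _]. rewrite h0. lra.
      - lra.
      - assert (Z := Hsq z ltac:(lra)). assert (fst (g z) = 0) by lra. rewrite H in Z.
        assert (0 < exp (m * z)) by apply exp_pos.
        assert (0 < fst p * exp (m*z)) by (apply Rmult_lt_0_compat; lra). simpl in Z. nra. }
    destruct (Req_dec (fst (g t)) 0) as [e|e]; [|tauto].
    assert (Z := Hsq t ht). rewrite e in Z. assert (0 < exp (m * t)) by apply exp_pos.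
    assert (0 < fst p * exp (m*t)) by (apply Rmult_lt_0_compat; lra). simpl in Z. nra. }
  intros t ht. split; [|apply Hpos; auto].
  assert (Z := Hsq t ht). assert (0 < exp (m * t)) by apply exp_pos. assert (P := Hpos t ht).
  assert (0 < fst p * exp (m * t)) by nra. nra.
Qed.

Lemma dist2_ge_x s q : Rabs (fst s - fst q) <= dist2 s q.
Proof.
  unfold dist2. rewrite <- sqrt_Rsqr_abs. apply sqrt_le_1_alt. unfold Rsqr.
  assert (0 <= (snd s - snd q)^2) by apply pow2_ge_0. simpl in *. lra.
Qed.
Lemma dist2_ge_y s q : Rabs (snd s - snd q) <= dist2 s q.
Proof.
  unfold dist2. rewrite <- sqrt_Rsqr_abs. apply sqrt_le_1_alt. unfold Rsqr.
  assert (0 <= (fst s - fst q)^2) by apply pow2_ge_0. simpl in *. lra.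
Qed.
Lemma dist2_pos s q : 0 <= dist2 s q.
Proof. unfold dist2. apply sqrt_pos. Qed.

Definition lin (al be ga : R) (p : pt) := al * fst p + be * snd p + ga.

Lemma lin_lip al be ga s q : Rabs (lin al be ga s - lin al be ga q) <= (Rabs al + Rabs be) * dist2 s q.
Proof.
  unfold lin. replace (al * fst s + be * snd s + ga - (al * fst q + be * snd q + ga))
    with (al * (fst s - fst q) + be * (snd s - snd q)) by ring.
  eapply Rle_trans; [apply Rabs_triang|]. rewrite !Rabs_mult.
  assert (X := dist2_ge_x s q). assert (Y := dist2_ge_y s q).
  assert (0 <= Rabs al) by apply Rabs_pos. assert (0 <= Rabs be) by apply Rabs_pos. nra.
Qed.

Definition lipf (f : pt -> R) (K : R) := 0 <= K /\ forall s q, Rabs (f s - f q) <= K * dist2 s q.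

Lemma lin_lipf al be ga : lipf (lin al be ga) (Rabs al + Rabs be).
Proof. split; [assert (0 <= Rabs al) by apply Rabs_pos; assert (0 <= Rabs be) by apply Rabs_pos; lra|apply lin_lip]. Qed.



Lemma closure_ge0 (f : pt -> R) K (S : pt -> Prop) c q : lipf f K ->
  (forall s, S s -> c <= f s) -> (forall e, 0 < e -> exists s, S s /\ dist2 s q < e) -> c <= f q.
Proof.
  intros [hK hf] hS hq. destruct (Rle_or_lt c (f q)) as [h|h]; auto. exfalso.
  destruct (hq ((c - f q) / (K + 1))) as [s [hs1 hs2]]. { apply Rdiv_lt_0_compat; lra. }
  assert (A := hS s hs1). assert (B := hf s q).
  assert (B2 : f s - f q <= K * dist2 s q) by (eapply Rle_trans; [apply RRle_abs|exact B]).
  assert (C : K * dist2 s q <= K * ((c - f q) / (K + 1))) by (apply Rmult_le_compat_l; lra).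
  assert (E : K * ((c - f q) / (K + 1)) < c - f q).
  { apply Rmult_lt_reg_r with (K + 1); [lra|]. field_simplify; [|lra]. nra. }
  lra.
Qed.

Lemma closure_ge (f : pt -> R) K (S : pt -> Prop) c q : lipf f K ->
  (forall s, S s -> c <= f s) -> closureG S q -> c <= f q.
Proof. intros hl hS [_ hq]. eapply closure_ge0; eauto. Qed.

Lemma closure_le (f : pt -> R) K (S : pt -> Prop) c q : lipf f K ->
  (forall s, S s -> f s <= c) -> closureG S q -> f q <= c.
Proof.
  intros [hK hf] hS hq.
  assert (L : lipf (fun p => - f p) K).
  { split; auto. intros s q'. replace (- f s - - f q') with (- (f s - f q')) by ring. rewrite Rabs_Ropp. auto. }
  assert (X := closure_ge (fun p => - f p) K S (- c) q L ltac:(intros s hs; specialize (hS s hs); lra) hq).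
  lra.
Qed.



Definition closedP (B : pt -> Prop) := forall q, (forall e, 0 < e -> exists s, B s /\ dist2 s q < e) -> B q.

Lemma closedP_ge f K c : lipf f K -> closedP (fun p => c <= f p).
Proof. intros hl q hq. apply (closure_ge0 f K (fun p => c <= f p) c q hl); auto. Qed.

Lemma closedP_le f K c : lipf f K -> closedP (fun p => f p <= c).
Proof.
  intros [hK hf] q hq.
  assert (L : lipf (fun p => - f p) K).
  { split; auto. intros s q'. replace (- f s - - f q') with (- (f s - f q')) by ring. rewrite Rabs_Ropp. auto. }
  assert (X := closure_ge0 (fun p => - f p) K (fun p => f p <= c) (- c) q L ltac:(intros s hs; lra) hq). lra.
Qed.

Lemma no_pc a b al be umin umax (Good Bad : pt -> Prop) (Z : pt -> R) K :
  lipf Z K -> closedP Bad ->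
  (forall u g p, admissible umin umax u -> is_solution a b al be u p g -> inG p ->
     forall s t, 0 <= s <= t -> Bad (g s) -> Bad (g t)) ->
  (forall u g p t, admissible umin umax u -> is_solution a b al be u p g -> inG p -> 0 <= t -> Good p ->
     (forall tau, 0 <= tau <= t -> ~ Bad (g tau)) -> Z p <= Z (g t)) ->
  (forall u g p, admissible umin umax u -> is_solution a b al be u p g -> inG p -> Good p ->
     (forall tau, 0 <= tau <= 1 -> ~ Bad (g tau)) -> Z p < Z (g 1) /\ Good (g 1)) ->
  forall D, pre_control_set a b al be umin umax D -> forall p, D p -> Good p -> ~ Bad p -> False.
Proof.
  intros [hK hZ] hB H1 H2 H3 D [hG [hi hii]] p hp hgood hbad.
  destruct (hi p hp) as [u [g [ha [hs hin]]]].
  assert (hq : D (g 1)) by (apply hin; lra).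
  assert (hcl := hii (g 1) hq p hp).
  destruct (classic (exists tau, 0 <= tau <= 1 /\ Bad (g tau))) as [[tau [ht hb]]|hn].
  - assert (Bq : Bad (g 1)) by (apply (H1 u g p ha hs (hG p hp) tau 1); auto; lra).
    apply hbad. apply hB. intros e he. destruct hcl as [_ hc]. destruct (hc e he) as [s [[u' [g' [t' [ha' [hs' [ht' E]]]]]] hd]].
    exists s; split; auto. subst s. apply (H1 u' g' (g 1) ha' hs' (hG _ hq) 0 t'); [lra|]. destruct hs' as [h0 _]. rewrite h0. auto.
  - assert (nb : forall tau, 0 <= tau <= 1 -> ~ Bad (g tau)) by (intros tau ht hb; apply hn; eauto).
    destruct (H3 u g p ha hs (hG p hp) hgood nb) as [Hlt Hg1].
    apply hbad. apply hB. intros e he. destruct hcl as [_ hc].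
    set (del := (Z (g 1) - Z p) / (K + 1)).
    assert (hdel : 0 < del) by (apply Rdiv_lt_0_compat; lra).
    destruct (hc (Rmin e del) (Rmin_pos _ _ he hdel)) as [s [[u' [g' [t' [ha' [hs' [ht' E]]]]]] hd]].
    exists s. split; [|apply Rlt_le_trans with (1 := hd); apply Rmin_l].
    subst s.
    destruct (classic (exists tau, 0 <= tau <= t' /\ Bad (g' tau))) as [[tau [ht hb]]|hn'].
    + apply (H1 u' g' (g 1) ha' hs' (hG _ hq) tau t'); auto; lra.
    + exfalso. assert (nb' : forall tau, 0 <= tau <= t' -> ~ Bad (g' tau)) by (intros tau ht hb; apply hn'; eauto).
      assert (Z1 := H2 u' g' (g 1) t' ha' hs' (hG _ hq) ht' Hg1 nb').
      assert (hd2 : dist2 (g' t') p < del) by (apply Rlt_le_trans with (1 := hd); apply Rmin_r).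
      assert (B := hZ (g' t') p). assert (B2 : Z (g' t') - Z p <= K * dist2 (g' t') p) by (eapply Rle_trans; [apply RRle_abs|exact B]).
      assert (C : K * dist2 (g' t') p <= K * del) by (apply Rmult_le_compat_l; [lra|left; auto]).
      assert (E2 : K * del < Z (g 1) - Z p).
      { unfold del. apply Rmult_lt_reg_r with (K + 1); [lra|]. field_simplify; [|lra]. nra. }
      lra.
Qed.

Lemma dist2_refl q : dist2 q q = 0.
Proof. unfold dist2. rewrite !Rminus_eq_0. simpl. replace (0*(0*1)+0*(0*1)) with 0 by ring. apply sqrt_0. Qed.

Lemma orbit_closure a b al be umin umax p q : orbit_plus a b al be umin umax p q -> inG q ->
  closureG (orbit_plus a b al be umin umax p) q.
Proof. intros ho hq. split; auto. intros e he. exists q. split; auto. rewrite dist2_refl; auto. Qed.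

Lemma unique_cs a b al be umin umax (C0 : pt -> Prop) : pre_control_set a b al be umin umax C0 ->
  (forall D, pre_control_set a b al be umin umax D -> forall p, D p -> C0 p) ->
  is_control_set a b al be umin umax C0 /\
  forall C, is_control_set a b al be umin umax C -> set_eq C C0.
Proof.
  intros hC hall. split.
  - split; auto. intros D hD _ p hp. apply (hall D hD p hp).
  - intros C [hCpre hmax] p. split.
    + intros hp. apply (hall C hCpre p hp).
    + intros hp. apply (hmax C0 hC (hall C hCpre) p hp).
Qed.

Lemma dist2_vert x y1 y2 : dist2 (x, y1) (x, y2) = Rabs (y1 - y2).
Proof. unfold dist2. simpl. rewrite Rminus_eq_0. rewrite <- sqrt_Rsqr_abs. f_equal. unfold Rsqr. ring. Qed.

Lemma dist2_sym s q : dist2 s q = dist2 q s.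
Proof. unfold dist2. f_equal. ring. Qed.

Lemma u_up al umin umax : umin < 0 -> 0 < umax -> al <> 0 ->
  exists u, umin <= u <= umax /\ 0 < u * al.
Proof.
  intros h1 h2 h3. destruct (Rlt_or_le 0 al).
  - exists umax. split; [lra|nra].
  - exists umin. split; [lra|]. assert (al < 0) by lra. nra.
Qed.
Lemma u_dn al umin umax : umin < 0 -> 0 < umax -> al <> 0 ->
  exists u, umin <= u <= umax /\ u * al < 0.
Proof.
  intros h1 h2 h3. destruct (Rlt_or_le 0 al).
  - exists umin. split; [lra|nra].
  - exists umax. split; [lra|]. assert (al < 0) by lra. nra.
Qed.

Lemma w_to_u al umin umax w : umin <= umax -> al <> 0 -> wmin al umin umax <= w <= wmax al umin umax ->
  umin <= w / al <= umax.
Proof.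
  intros hu hal [h1 h2]. unfold wmin, wmax, Rmin, Rmax in *.
  destruct (Rlt_or_le 0 al) as [p|n].
  - assert (al * umin <= al * umax) by nra.
    destruct (Rle_dec (al * umin) (al * umax)) as [h|h]; [|lra].
    split; apply (Rmult_le_reg_l al); auto; replace (al * (w / al)) with w by (field; lra); lra.
  - assert (al < 0) by lra. assert (al * umax <= al * umin) by nra.
    assert (E : - al * (w / al) = - w) by (field; lra).
    destruct (Rle_dec (al * umin) (al * umax)) as [h|h].
    + assert (al * umin = al * umax) by lra. split; apply (Rmult_le_reg_l (-al)); try lra; rewrite E; lra.
    + split; apply (Rmult_le_reg_l (-al)); try lra; rewrite E; lra.
Qed.

Lemma wmin_neg al umin umax : umin < 0 -> 0 < umax -> al <> 0 -> wmin al umin umax < 0.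
Proof. intros. unfold wmin, Rmin. destruct (Rle_dec _ _); destruct (Rlt_or_le 0 al); nra. Qed.
Lemma wmax_pos al umin umax : umin < 0 -> 0 < umax -> al <> 0 -> 0 < wmax al umin umax.
Proof. intros. unfold wmax, Rmax. destruct (Rle_dec _ _); destruct (Rlt_or_le 0 al); nra. Qed.

Lemma const_sol_fun (f u : R -> R) umin umax : admissible umin umax u ->
  (forall x, continuity_pt f x) ->
  (forall x, locally_const u x -> derivable_pt_lim f x 0) ->
  forall s t, s <= t -> f s = f t.
Proof.
  intros ha hc hd s t hst. apply Rle_antisym.
  - apply (mono_sol f u umin umax (fun _ => True) ha hc); auto.
    intros x _ hl. exists 0. split; [apply hd; auto|lra].
  - assert (M := mono_sol (fun x => - f x) u umin umax (fun _ => True) ha).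
    assert (X : - f s <= - f t); [|lra]. apply M; auto.
    + intros x. apply continuity_pt_opp. auto.
    + intros x _ hl. exists (-0). split; [|lra]. apply derivable_pt_lim_opp. apply hd; auto.
Qed.

Definition lfun (al' be' ga k de : R) (g : R -> pt) (s : R) := lin al' be' ga (g s) * exp (k * s) + de * s.

Definition lder a b al be (u : R -> R) (al' be' ga k de : R) (g : R -> pt) (x : R) :=
  (al' * (u x * al * fst (g x)) + be' * (a * (fst (g x) - 1) + b * snd (g x) + u x * fst (g x) * be)
    + k * lin al' be' ga (g x)) * exp (k * x) + de.

Lemma lfun_cont a b al be u p g al' be' ga k de : is_solution a b al be u p g ->
  forall t, continuity_pt (lfun al' be' ga k de g) t.
Proof.
  intros hs t. unfold lfun, lin.
  assert (cx := cont_fst _ _ _ _ _ _ _ hs t). assert (cy := cont_snd _ _ _ _ _ _ _ hs t).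
  apply continuity_pt_plus.
  - apply continuity_pt_mult.
    + apply continuity_pt_plus; [apply continuity_pt_plus|].
      * apply continuity_pt_mult; auto. apply continuity_pt_const; intros ? ?; auto.
      * apply continuity_pt_mult; auto. apply continuity_pt_const; intros ? ?; auto.
      * apply continuity_pt_const; intros ? ?; auto.
    + apply derivable_continuous_pt. apply derivable_pt_comp; [|apply derivable_pt_exp].
      apply derivable_pt_scal, derivable_pt_id.
  - apply continuity_pt_mult; [apply continuity_pt_const; intros ? ?; auto|].
    apply derivable_continuous_pt, derivable_pt_id.
Qed.

Lemma lfun_deriv a b al be u p g al' be' ga k de x : is_solution a b al be u p g -> locally_const u x ->
  derivable_pt_lim (lfun al' be' ga k de g) x (lder a b al be u al' be' ga k de g x).
Proof.
  intros hs hl. destruct (sol_deriv _ _ _ _ _ _ _ x hs hl) as [hx hy].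
  apply (proj1 (is_derive_Reals _ _ _)). unfold lfun, lder, lin.
  assert (G : forall (X Y : R -> R) dx dy, is_derive X x dx -> is_derive Y x dy ->
    is_derive (fun s => (al' * X s + be' * Y s + ga) * exp (k * s) + de * s) x
      ((al' * dx + be' * dy + k * (al' * X x + be' * Y x + ga)) * exp (k * x) + de)).
  { intros X Y dx dy hX hY. dsolve2 X hX Y hY. ring. }
  exact (G (fun s => fst (g s)) (fun s => snd (g s)) _ _ hx hy).
Qed.

Lemma lfun_mono a b al be umin umax u p g al' be' ga k de (P : R -> Prop) :
  admissible umin umax u -> is_solution a b al be u p g ->
  (forall x, P x -> locally_const u x -> 0 <= lder a b al be u al' be' ga k de g x) ->
  forall s t, s <= t -> (forall x, s < x < t -> P x) -> lfun al' be' ga k de g s <= lfun al' be' ga k de g t.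
Proof.
  intros ha hs hd. refine (mono_sol (lfun al' be' ga k de g) u umin umax P ha _ _).
  - exact (lfun_cont a b al be u p g al' be' ga k de hs).
  - intros x hP hl. eexists. split; [apply (lfun_deriv a b al be u p g); auto|]. apply hd; auto.
Qed.

Lemma lfun_const a b al be umin umax u p g al' be' ga k de :
  admissible umin umax u -> is_solution a b al be u p g ->
  (forall x, locally_const u x -> lder a b al be u al' be' ga k de g x = 0) ->
  forall s t, s <= t -> lfun al' be' ga k de g s = lfun al' be' ga k de g t.
Proof.
  intros ha hs hd. refine (const_sol_fun (lfun al' be' ga k de g) u umin umax ha _ _).
  - exact (lfun_cont a b al be u p g al' be' ga k de hs).
  - intros x hl. rewrite <- (hd x hl). apply (lfun_deriv a b al be u p g); auto.
Qed.

Lemma lfun_0 al' be' ga k de g : lfun al' be' ga k de g 0 = lin al' be' ga (g 0).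
Proof. unfold lfun. rewrite !Rmult_0_r, exp_0. ring. Qed.

Lemma x_const a b be umin umax u p g : admissible umin umax u -> is_solution a b 0 be u p g ->
  forall t, fst (g t) = fst p.
Proof.
  intros ha hs t.
  assert (H : forall s t, s <= t -> lfun 1 0 0 0 0 g s = lfun 1 0 0 0 0 g t).
  { apply (lfun_const a b 0 be umin umax u p g); auto. intros x hl. unfold lder, lin. ring. }
  assert (E : forall s, lfun 1 0 0 0 0 g s = fst (g s)) by (intros s; unfold lfun, lin; rewrite !Rmult_0_l, exp_0; ring).
  destruct hs as [h0 _].
  destruct (Rle_or_lt 0 t).
  - rewrite <- E, <- (H 0 t); auto. rewrite E, h0; auto.
  - rewrite <- E, (H t 0); [|lra]. rewrite E, h0; auto.
Qed.

Lemma exp_ge1 x : 0 <= x -> 1 <= exp x.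
Proof. intros h. rewrite <- exp_0. destruct h as [h|h]; [left; apply exp_increasing; auto|subst; lra]. Qed.
Lemma exp_le1 x : x <= 0 -> exp x <= 1.
Proof. intros h. rewrite <- exp_0. destruct h as [h|h]; [left; apply exp_increasing; auto|subst; lra]. Qed.
Lemma exp_gt1 x : 0 < x -> 1 < exp x.
Proof. intros h. rewrite <- exp_0. apply exp_increasing; auto. Qed.
Lemma exp_lt1 x : x < 0 -> exp x < 1.
Proof. intros h. rewrite <- exp_0. apply exp_increasing; auto. Qed.

Lemma part3 (umin umax a b al be : R) (humin : umin < 0) (humax : 0 < umax)
  (hab : a <> 0 \/ b <> 0) :
  al <> 0 -> a * al + b * be = 0 ->
     let L := fun p : pt => 0 < fst p /\ snd p = be / al * (fst p - 1) in
     is_control_set a b al be umin umax L /\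
     forall C, is_control_set a b al be umin umax C -> set_eq C L.
Proof.
  intros hal hc L.
  assert (ha' : a = - (b * be) / al) by (field_simplify_eq; [lra|auto]).
  assert (hb : b <> 0) by (intro e; subst b; rewrite ha' in hab; destruct hab as [h|h]; apply h; field; auto).
  set (zf := lin (- (be / al)) 1 (be / al)).
  assert (zevol : forall u g p, admissible umin umax u -> is_solution a b al be u p g ->
     forall t, 0 <= t -> zf (g t) = zf p * exp (b * t)).
  { intros u g p hu hs t ht.
    assert (K := lfun_const a b al be umin umax u p g (- (be / al)) 1 (be / al) (- b) 0 hu hs).
    assert (K2 : lfun (- (be / al)) 1 (be / al) (- b) 0 g 0 = lfun (- (be / al)) 1 (be / al) (- b) 0 g t).
    { apply K; auto. intros x hl. unfold lder, lin. rewrite ha'. field. auto. }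
    rewrite lfun_0 in K2. unfold lfun in K2. destruct hs as [h0 _]. rewrite h0 in K2. fold zf in K2.
    rewrite K2. rewrite Rmult_0_l, Rplus_0_r, Rmult_assoc, <- exp_plus.
    replace (- b * t + b * t) with 0 by ring. rewrite exp_0. ring. }
  assert (flow : forall p v, umin <= v <= umax -> L p -> forall t, 0 <= t ->
     orbit_plus a b al be umin umax p (fst p * exp (v * al * t), be / al * (fst p * exp (v * al * t) - 1))).
  { intros p v hv [hp1 hp2] t ht.
    apply (const_orbit a b al be umin umax v p (fun t => fst p * exp (v * al * t))
                 (fun t => be / al * (fst p * exp (v * al * t) - 1))); auto.
    - simpl. rewrite Rmult_0_r, exp_0. ring.
    - simpl. rewrite Rmult_0_r, exp_0, Rmult_1_r. auto.
    - intros s. auto_derive; auto. ring.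
    - intros s. auto_derive; auto. rewrite ha'. field. auto. }
  assert (ctrl : forall p q, L p -> L q -> orbit_plus a b al be umin umax p q).
  { intros p q hp hq. destruct hp as [hp1 hp2]. destruct hq as [hq1 hq2].
    set (l := ln (fst q / fst p)).
    assert (hl : exp l = fst q / fst p) by (unfold l; apply exp_ln; apply Rdiv_lt_0_compat; auto).
    assert (key : forall v, umin <= v <= umax -> v * al <> 0 -> 0 <= l / (v * al) ->
               orbit_plus a b al be umin umax p q).
    { intros v hv hne ht. assert (F := flow p v hv (conj hp1 hp2) (l / (v * al)) ht).
      assert (v <> 0) by (intro e; apply hne; rewrite e; ring).
      replace (v * al * (l / (v * al))) with l in F by (field; auto). rewrite hl in F.
      replace (fst p * (fst q / fst p)) with (fst q) in F by (field; lra).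
      rewrite <- hq2 in F. destruct q; auto. }
    destruct (Rle_or_lt 0 l) as [h|h].
    - destruct (u_up al umin umax humin humax hal) as [v [hv hv2]].
      apply (key v hv); [lra|]. apply Rdiv_le_0_compat; auto.
    - destruct (u_dn al umin umax humin humax hal) as [v [hv hv2]].
      apply (key v hv); [lra|].
      assert (0 < l / (v*al)); [|lra].
      assert (v <> 0) by (intro e; rewrite e in hv2; lra).
      replace (l/(v*al)) with ((-l)/(-(v*al))) by (field; auto). apply Rdiv_lt_0_compat; lra. }
  assert (pre : pre_control_set a b al be umin umax L).
  { split; [|split].
    - intros p [h _]. exact h.
    - intros p hp. destruct hp as [hp1 hp2].
      destruct (const_sol a b al be umin umax 0 p (fun _ => fst p) (fun _ => snd p)) as [A S]; auto; try lra.
      + intros t. auto_derive; auto. ring.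
      + intros t. auto_derive; auto. rewrite hp2, ha'. field. auto.
      + exists (fun _ => 0), (fun _ => (fst p, snd p)). split; auto. split; auto.
        intros t _. split; auto.
    - intros p hp q hq. apply orbit_closure; [apply ctrl; auto|]. destruct hq; auto. }
  assert (zlip : lipf zf (Rabs (- (be / al)) + Rabs 1)) by apply lin_lipf.
  assert (all : forall D, pre_control_set a b al be umin umax D -> forall p, D p -> L p).
  { intros D [hG [hi hii]] p hp. assert (hx := hG p hp). split; auto.
    destruct (Req_dec (zf p) 0) as [hz|hz].
    - unfold zf, lin in hz. lra.
    - exfalso. destruct (hi p hp) as [u [g [hu [hs hin]]]].
      assert (hq : D (g 1)) by (apply hin; lra).
      assert (hcl := hii (g 1) hq p hp).
      assert (zq : zf (g 1) = zf p * exp b) by (rewrite (zevol u g p hu hs 1); [f_equal; f_equal; ring|lra]).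
      assert (orb : forall r, orbit_plus a b al be umin umax (g 1) r -> exists t, 0 <= t /\ zf r = zf (g 1) * exp (b * t)).
      { intros r [u' [g' [t' [hu' [hs' [ht' E]]]]]]. exists t'. split; auto. subst r.
        apply (zevol u' g' (g 1) hu' hs' t' ht'). }
      assert (eb := exp_pos b). 
      destruct (Rlt_or_le 0 b) as [bp|bn]; [|assert (bn' : b < 0) by (destruct bn; auto; contradiction)];
      destruct (Rlt_or_le 0 (zf p)) as [zp|zn]; try assert (zn' : zf p < 0) by (destruct zn; auto; contradiction).
      + assert (hA : 0 < zf (g 1)) by (rewrite zq; apply Rmult_lt_0_compat; auto).
        assert (X := closure_ge zf _ _ (zf (g 1)) p zlip ltac:(intros s hs'; destruct (orb s hs') as [t [ht E]];
           rewrite E; assert (1 <= exp (b * t)) by (apply exp_ge1; nra); nra) hcl).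
        assert (1 < exp b) by (apply exp_gt1; auto). rewrite zq in X. nra.
      + assert (hA : zf (g 1) < 0) by (rewrite zq; nra).
        assert (X := closure_le zf _ _ (zf (g 1)) p zlip ltac:(intros s hs'; destruct (orb s hs') as [t [ht E]];
           rewrite E; assert (1 <= exp (b * t)) by (apply exp_ge1; nra); nra) hcl).
        assert (1 < exp b) by (apply exp_gt1; auto). rewrite zq in X. nra.
      + assert (hA : 0 < zf (g 1)) by (rewrite zq; apply Rmult_lt_0_compat; auto).
        assert (X := closure_le zf _ _ (zf (g 1)) p zlip ltac:(intros s hs'; destruct (orb s hs') as [t [ht E]];
           rewrite E; assert (exp (b * t) <= 1) by (apply exp_le1; nra); nra) hcl).
        assert (exp b < 1) by (apply exp_lt1; auto). rewrite zq in X. nra.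
      + assert (hA : zf (g 1) < 0) by (rewrite zq; nra).
        assert (X := closure_ge zf _ _ (zf (g 1)) p zlip ltac:(intros s hs'; destruct (orb s hs') as [t [ht E]];
           rewrite E; assert (exp (b * t) <= 1) by (apply exp_le1; nra); nra) hcl).
        assert (exp b < 1) by (apply exp_lt1; auto). rewrite zq in X. nra. }
  apply unique_cs; auto.
Qed.

Lemma part1 (umin umax a b al be : R) (humin : umin < 0) (humax : 0 < umax)
  (hab : a <> 0 \/ b <> 0) (halbe : al <> 0 \/ be <> 0) :
  al = 0 -> a * al + b * be = 0 ->
     exists eps, 0 < eps /\ forall x, 1 - eps < x < 1 + eps ->
       is_control_set a b al be umin umax (fun p => fst p = x).
Proof.
  intros hal hc. subst al.
  assert (hbe : be <> 0) by (destruct halbe; [lra|auto]).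
  assert (hb : b = 0). { rewrite Rmult_0_r, Rplus_0_l in hc. destruct (Rmult_integral _ _ hc); auto. contradiction. }
  subst b. assert (ha : a <> 0) by (destruct hab; auto; lra).
  set (mu := Rmin (- umin) umax).
  assert (hmu : 0 < mu) by (unfold mu; apply Rmin_pos; lra).
  assert (hmu1 : mu <= - umin) by apply Rmin_l. assert (hmu2 : mu <= umax) by apply Rmin_r.
  assert (hbea : 0 < Rabs be) by (apply Rabs_pos_lt; auto).
  assert (haa : 0 <= Rabs a) by apply Rabs_pos.
  set (eps := Rmin (1/2) (Rabs be * mu / (4 * (Rabs a + 1)))).
  assert (he1 : eps <= 1/2) by apply Rmin_l.
  assert (he2 : eps <= Rabs be * mu / (4 * (Rabs a + 1))) by apply Rmin_r.
  assert (hep : 0 < eps) by (apply Rmin_pos; [lra|apply Rdiv_lt_0_compat; [nra|lra]]).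
  exists eps. split; auto. intros x hx.
  assert (hx0 : 1/2 < x) by lra.
  set (r := fun u => a * (x - 1) + u * x * be).
  assert (hax : Rabs (a * (x - 1)) < Rabs be * mu / 4).
  { rewrite Rabs_mult. assert (Rabs (x - 1) < eps) by (apply Rabs_def1; lra).
    assert (Rabs a * Rabs (x - 1) <= Rabs a * eps) by (apply Rmult_le_compat_l; lra).
    assert (Rabs a * eps <= Rabs a * (Rabs be * mu / (4 * (Rabs a + 1)))) by (apply Rmult_le_compat_l; lra).
    assert (Rabs a * (Rabs be * mu / (4 * (Rabs a + 1))) < Rabs be * mu / 4).
    { apply Rmult_lt_reg_r with (4 * (Rabs a + 1)); [lra|]. field_simplify; [|lra]. nra. }
    lra. }
  assert (hsign : exists up dn, umin <= up <= umax /\ umin <= dn <= umax /\ 0 < r up /\ r dn < 0).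
  { apply Rabs_def2 in hax as [h1 h2]. unfold r.
    destruct (Rlt_or_le 0 be) as [bp|bn].
    - rewrite Rabs_right in h1, h2 by lra.
      assert (P1 : mu * be / 2 <= umax * x * be).
      { assert (0 < umax*be) by nra. assert (mu*be <= umax*be) by nra. nra. }
      assert (P2 : umin * x * be <= - (mu*be/2)).
      { assert (mu * be <= -umin*be) by nra. assert (0 < -umin*be) by nra. nra. }
      exists umax, umin. split; [lra|split; [lra|split]]; lra.
    - assert (be < 0) by (destruct bn; auto; contradiction). rewrite Rabs_left in h1, h2 by lra.
      assert (P1 : mu * (-be) / 2 <= umin * x * be).
      { assert (0 < umin*be) by nra. assert (mu*(-be) <= umin*be) by nra. nra. }
      assert (P2 : umax * x * be <= - (mu*(-be)/2)).
      { assert (mu * (-be) <= -umax*be) by nra. assert (0 < -umax*be) by nra. nra. }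
      exists umin, umax. split; [lra|split; [lra|split]]; lra. }
  destruct hsign as [up [dn [hup [hdn [hr1 hr2]]]]].
  assert (flow : forall v y0, umin <= v <= umax -> forall t, 0 <= t ->
           orbit_plus a 0 0 be umin umax (x, y0) (x, y0 + r v * t)).
  { intros v y0 hv t ht.
    apply (const_orbit a 0 0 be umin umax v (x, y0) (fun _ => x) (fun t => y0 + r v * t)); auto.
    - simpl. ring.
    - intros s. auto_derive; auto. ring.
    - intros s. unfold r. auto_derive; auto. ring. }
  assert (pre : pre_control_set a 0 0 be umin umax (fun p => fst p = x)).
  { split; [|split].
    - intros p hp. unfold inG. lra.
    - intros p hp.
      assert (dX : forall t, is_derive (fun _ : R => fst p) t (0 * 0 * fst p)) by (intros t; auto_derive; auto; ring).
      assert (dY : forall t, is_derive (fun t => snd p + r 0 * t) t (a * (fst p - 1) + 0 * (snd p + r 0 * t) + 0 * fst p * be))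
        by (intros t; unfold r; auto_derive; auto; rewrite hp; ring).
      destruct (const_sol a 0 0 be umin umax 0 p (fun _ => fst p) (fun t => snd p + r 0 * t) ltac:(lra) eq_refl
         ltac:(simpl; ring) dX dY) as [A S].
      exists (fun _ => 0), (fun t => (fst p, snd p + r 0 * t)). split; [exact A|split; [exact S|intros t _; exact hp]].
    - intros p hp q hq. apply orbit_closure; [|unfold inG; lra].
      destruct p as [px py], q as [qx qy]. simpl in hp, hq. subst px qx.
      destruct (Rle_or_lt py qy) as [h|h].
      + assert (F := flow up py hup ((qy - py) / r up) ltac:(apply Rdiv_le_0_compat; lra)).
        replace (py + r up * ((qy - py) / r up)) with qy in F by (field; lra). exact F.
      + assert (F := flow dn py hdn ((qy - py) / r dn) ltac:(assert (0 < (py - qy) / - r dn) by (apply Rdiv_lt_0_compat; lra);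
            replace ((qy - py) / r dn) with ((py - qy) / - r dn) by (field; lra); lra)).
        replace (py + r dn * ((qy - py) / r dn)) with qy in F by (field; lra). exact F. }
  split; auto.
  intros D [hG [hi hii]] hsub q hq.
  assert (hp0 : D (x, 0)) by (apply hsub; reflexivity).
  assert (hcl := hii (x, 0) hp0 q hq).
  assert (orb : forall s, orbit_plus a 0 0 be umin umax (x, 0) s -> fst s = x).
  { intros s [u [g [t [hu [hs [ht E]]]]]]. subst s. rewrite (x_const a 0 be umin umax u (x, 0) g hu hs t). reflexivity. }
  assert (L := lin_lipf 1 0 0).
  assert (X1 := closure_ge _ _ _ x q L ltac:(intros s hs; unfold lin; rewrite (orb s hs); lra) hcl).
  assert (X2 := closure_le _ _ _ x q L ltac:(intros s hs; unfold lin; rewrite (orb s hs); lra) hcl).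
  unfold lin in X1, X2. lra.
Qed.

Lemma betw_le a b y : a <= b -> (a <= y <= b <-> (y - a) * (y - b) <= 0).
Proof.
  intros hab. split; [intros [h1 h2]; nra|intros h].
  split; [destruct (Rle_or_lt a y) as [|h']; [auto|exfalso]|destruct (Rle_or_lt y b) as [|h']; [auto|exfalso]].
  - assert (0 < (a - y) * (b - y)) by (apply Rmult_lt_0_compat; lra). nra.
  - assert (0 < (y - a) * (y - b)) by (apply Rmult_lt_0_compat; lra). nra.
Qed.
Lemma betw_lt a b y : a <= b -> (a < y < b <-> (y - a) * (y - b) < 0).
Proof.
  intros hab. split; [intros [h1 h2]; assert (0 < (y - a) * (b - y)) by (apply Rmult_lt_0_compat; lra); nra|intros h].
  split; [destruct (Rlt_or_le a y) as [|h']; [auto|exfalso]|destruct (Rlt_or_le y b) as [|h']; [auto|exfalso]].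
  - assert (0 <= (a - y) * (b - y)) by (apply Rmult_le_pos; lra). nra.
  - assert (0 <= (y - a) * (y - b)) by (apply Rmult_le_pos; lra). nra.
Qed.

Lemma part2 (umin umax a b al be : R) (humin : umin < 0) (humax : 0 < umax) :
  al = 0 -> a * al + b * be <> 0 ->
     forall x, 0 < x ->
       exists I : R -> Prop,
         is_interval I /\
         (exists M, forall y, I y -> Rabs y <= M) /\
         (exists y0 r, 0 < r /\ forall y, Rabs (y - y0) < r -> I y) /\
         I (- a / b * (x - 1)) /\
         is_control_set a b al be umin umax (fun p => fst p = x /\ I (snd p)).
Proof.
  intros hal hc x0 hx0. subst al. rewrite Rmult_0_r, Rplus_0_l in hc.
  assert (hb : b <> 0) by (intro e; apply hc; rewrite e; ring).
  assert (hbe : be <> 0) by (intro e; apply hc; rewrite e; ring).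
  set (yu := fun u => - (a * (x0 - 1) + u * x0 * be) / b).
  set (lo := Rmin (yu umin) (yu umax)). set (hi := Rmax (yu umin) (yu umax)).
  set (beta := - (x0 * be) / b).
  assert (hbeta : beta <> 0).
  { unfold beta, Rdiv. apply Rmult_integral_contrapositive_currified.
    - apply Ropp_neq_0_compat. apply Rmult_integral_contrapositive_currified; lra.
    - apply Rinv_neq_0_compat; auto. }
  assert (hbb : 0 < beta * beta) by (apply (Rsqr_pos_lt beta hbeta)).
  assert (yulin : forall u v, yu u - yu v = beta * (u - v)) by (intros; unfold yu, beta; field; auto).
  assert (hlohi : forall y, lo <= y <= hi <-> (y - yu umin) * (y - yu umax) <= 0).
  { intros y. unfold lo, hi, Rmin, Rmax. destruct (Rle_dec (yu umin) (yu umax)).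
    - apply betw_le; auto.
    - rewrite betw_le by lra. split; intros; nra. }
  assert (hlohi' : forall y, lo < y < hi <-> (y - yu umin) * (y - yu umax) < 0).
  { intros y. unfold lo, hi, Rmin, Rmax. destruct (Rle_dec (yu umin) (yu umax)).
    - apply betw_lt; auto.
    - rewrite betw_lt by lra. split; intros; nra. }
  assert (F1 : forall u, umin <= u <= umax -> lo <= yu u <= hi).
  { intros u hu. apply hlohi. rewrite (yulin u umin), (yulin u umax).
    replace (beta * (u - umin) * (beta * (u - umax))) with ((beta*beta) * ((u - umin)*(u - umax))) by ring.
    assert ((u-umin)*(u-umax) <= 0) by nra. nra. }
  assert (F2 : forall y, lo <= y <= hi -> exists u, umin <= u <= umax /\ yu u = y).
  { intros y hy. exists ((y - yu 0) / beta + 0).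
    assert (E : yu ((y - yu 0) / beta + 0) = y).
    { assert (Y := yulin ((y - yu 0) / beta + 0) 0). replace (beta * ((y - yu 0) / beta + 0 - 0)) with (y - yu 0) in Y by (field; auto). lra. }
    split; auto. apply hlohi in hy. rewrite <- E in hy. rewrite (yulin _ umin), (yulin _ umax) in hy.
    set (w := (y - yu 0) / beta + 0) in *.
    assert (((w - umin) * (w - umax)) <= 0).
    { apply (Rmult_le_reg_l (beta * beta)); auto. replace (beta * beta * ((w - umin) * (w - umax))) with
        (beta * (w - umin) * (beta * (w - umax))) by ring. lra. }
    destruct (betw_le umin umax w ltac:(lra)) as [_ K]. apply K; auto. }
  assert (F3 : lo < yu 0 < hi).
  { apply hlohi'. rewrite (yulin 0 umin), (yulin 0 umax).
    replace (beta * (0 - umin) * (beta * (0 - umax))) with ((beta*beta) * ((0 - umin)*(0 - umax))) by ring.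
    assert ((0-umin)*(0-umax) < 0) by nra. nra. }
  assert (Fy0 : yu 0 = - a / b * (x0 - 1)) by (unfold yu; field; auto).
  assert (flowsol : forall v y0, umin <= v <= umax ->
     admissible umin umax (fun _ => v) /\
     is_solution a b 0 be (fun _ => v) (x0, y0) (fun t => (x0, yu v + (y0 - yu v) * exp (b * t)))).
  { intros v y0 hv. apply (const_sol a b 0 be umin umax v (x0, y0) (fun _ => x0) (fun t => yu v + (y0 - yu v) * exp (b * t))); auto.
    - simpl. rewrite Rmult_0_r, exp_0. ring.
    - intros t. auto_derive; auto. ring.
    - intros t. unfold yu. auto_derive; auto. field. auto. }
  assert (flow : forall v y0 t, umin <= v <= umax -> 0 <= t ->
     orbit_plus a b 0 be umin umax (x0, y0) (x0, yu v + (y0 - yu v) * exp (b * t))).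
  { intros v y0 t hv ht. destruct (flowsol v y0 hv) as [A S].
    exists (fun _ => v), (fun t => (x0, yu v + (y0 - yu v) * exp (b * t))), t. split; [exact A|split; [exact S|split; [lra|reflexivity]]]. }
  assert (W : forall u g p c, admissible umin umax u -> is_solution a b 0 be u p g -> fst p = x0 ->
      forall t, 0 <= t ->
      ((forall v, umin <= v <= umax -> 0 <= b * (c - yu v)) -> snd p - c <= (snd (g t) - c) * exp (- b * t)) /\
      ((forall v, umin <= v <= umax -> b * (c - yu v) <= 0) -> (snd (g t) - c) * exp (- b * t) <= snd p - c)).
  { intros u g p c hu hs hp t ht.
    assert (xc := x_const a b be umin umax u p g hu hs).
    assert (e0 : lfun 0 1 (- c) (- b) 0 g 0 = snd p - c) by (rewrite lfun_0; destruct hs as [h0 _]; rewrite h0; unfold lin; ring).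
    assert (et : lfun 0 1 (- c) (- b) 0 g t = (snd (g t) - c) * exp (- b * t)) by (unfold lfun, lin; ring).
    assert (D : forall s, lder a b 0 be u 0 1 (- c) (- b) 0 g s = b * (c - yu (u s)) * exp (- b * s)).
    { intros s. unfold lder, lin, yu. rewrite (xc s), hp. field. auto. }
    destruct hu as [hv hpw].
    split; intros H.
    - rewrite <- e0, <- et. apply (lfun_mono a b 0 be umin umax u p g 0 1 (- c) (- b) 0 (fun _ => True)); auto.
      + split; auto.
      + intros s _ _. rewrite D. apply Rmult_le_pos; [apply H; auto|left; apply exp_pos].
    - assert (K : lfun 0 (-1) c (- b) 0 g 0 <= lfun 0 (-1) c (- b) 0 g t).
      { apply (lfun_mono a b 0 be umin umax u p g 0 (-1) c (- b) 0 (fun _ => True)); auto.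
        + split; auto.
        + intros s _ _. unfold lder, lin, yu. rewrite (xc s), hp.
          replace ((0 * (u s * 0 * x0) + -1 * (a * (x0 - 1) + b * snd (g s) + u s * x0 * be) + - b * (0 * x0 + -1 * snd (g s) + c)) *
               exp (- b * s) + 0) with (- (b * (c - yu (u s))) * exp (- b * s)) by (unfold yu; field; auto).
          apply Rmult_le_pos; [|left; apply exp_pos]. assert (X := H (u s) (hv s)). lra. }
      rewrite lfun_0 in K. unfold lfun, lin in K. destruct hs as [h0 _]. rewrite h0 in K. lra. }
  assert (orbx : forall p r, fst p = x0 -> orbit_plus a b 0 be umin umax p r -> fst r = x0).
  { intros p r hp [u [g [t [hu [hs [ht E]]]]]]. subst r. rewrite (x_const a b be umin umax u p g hu hs t). auto. }
  assert (orby : forall p r c, fst p = x0 -> orbit_plus a b 0 be umin umax p r ->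
     exists t, ((forall v, umin <= v <= umax -> 0 <= b * (c - yu v)) -> snd p - c <= (snd r - c) * exp (- b * t)) /\
      ((forall v, umin <= v <= umax -> b * (c - yu v) <= 0) -> (snd r - c) * exp (- b * t) <= snd p - c)).
  { intros p r c hp [u [g [t [hu [hs [ht E]]]]]]. subst r. exists t. apply (W u g p c hu hs hp t ht). }
  assert (LX := lin_lipf 1 0 0). assert (LY := lin_lipf 0 1 0).
  assert (hlohi2 : lo < hi) by lra.
  assert (exp_pos' := exp_pos).
  assert (hlin : forall p, lin 1 0 0 p = fst p) by (intros; unfold lin; ring).
  assert (hlin2 : forall p, lin 0 1 0 p = snd p) by (intros; unfold lin; ring).
  destruct (Rlt_or_le b 0) as [bn|bp'].
  - exists (fun y => lo <= y <= hi). split; [|split; [|split; [|split]]].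
    + intros y1 y2 y h1 h2 h3. lra.
    + exists (Rabs lo + Rabs hi). intros y hy. unfold Rabs. repeat destruct Rcase_abs; lra.
    + exists ((lo + hi) / 2), ((hi - lo) / 2). split; [lra|]. intros y hy. apply Rabs_def2 in hy. lra.
    + rewrite <- Fy0. lra.
    + assert (pre : pre_control_set a b 0 be umin umax (fun p => fst p = x0 /\ lo <= snd p <= hi)).
      { split; [|split].
        - intros p [hp _]. unfold inG. lra.
        - intros [px py] [hp hy]. simpl in hp, hy. subst px. destruct (F2 py hy) as [v [hv ev]].
          destruct (flowsol v py hv) as [A S].
          exists (fun _ => v), (fun t => (x0, yu v + (py - yu v) * exp (b * t))). split; [exact A|split; [exact S|]].
          intros t _. simpl. rewrite ev. split; auto. replace (py + (py - py) * exp (b * t)) with py by ring. auto.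
        - intros [px py] [hp hy] [qx qy] [hq hqy]. simpl in *. subst px qx. split; [unfold inG; simpl; lra|].
          intros e he. destruct (F2 qy hqy) as [v [hv ev]].
          set (D := py - qy). set (t := Rmax 0 (ln (e / (Rabs D + 1)) / b)).
          assert (ht : 0 <= t) by apply Rmax_l.
          assert (hpos : 0 < e / (Rabs D + 1)) by (apply Rdiv_lt_0_compat; [lra|assert (0 <= Rabs D) by apply Rabs_pos; lra]).
          assert (hbt : b * t <= ln (e / (Rabs D + 1))).
          { assert (ln (e / (Rabs D + 1)) / b <= t) by apply Rmax_r.
            replace (ln (e / (Rabs D + 1))) with (b * (ln (e / (Rabs D + 1)) / b)) by (field; lra). nra. }
          assert (hexp : exp (b * t) <= e / (Rabs D + 1)).
          { rewrite <- (exp_ln (e / (Rabs D + 1))) by auto. destruct hbt as [h|h]; [left; apply exp_increasing; auto|rewrite h; lra]. }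
          exists (x0, yu v + (py - yu v) * exp (b * t)). split; [apply flow; auto|].
          rewrite dist2_vert. rewrite ev. fold D. replace (qy + D * exp (b * t) - qy) with (D * exp (b * t)) by ring.
          rewrite Rabs_mult, (Rabs_right (exp (b * t))) by (left; apply exp_pos).
          assert (0 <= Rabs D) by apply Rabs_pos.
          assert (Rabs D * exp (b * t) <= Rabs D * (e / (Rabs D + 1))) by (apply Rmult_le_compat_l; auto).
          assert (Rabs D * (e / (Rabs D + 1)) < e).
          { apply Rmult_lt_reg_r with (Rabs D + 1); [lra|]. field_simplify; [|lra]. nra. }
          lra. }
      split; auto.
      intros D [hG [hi' hii]] hsub q hq.
      assert (hp0 : D (x0, yu 0)) by (apply hsub; simpl; split; [auto|lra]).
      assert (hcl := hii (x0, yu 0) hp0 q hq).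
      assert (X1 := closure_ge _ _ (orbit_plus a b 0 be umin umax (x0, yu 0)) x0 q LX ltac:(intros s hs; rewrite hlin, (orbx (x0, yu 0) s eq_refl hs); lra) hcl).
      assert (X2 := closure_le _ _ (orbit_plus a b 0 be umin umax (x0, yu 0)) x0 q LX ltac:(intros s hs; rewrite hlin, (orbx (x0, yu 0) s eq_refl hs); lra) hcl).
      rewrite hlin in X1, X2. split; [lra|].
      split.
      * rewrite <- (hlin2 q). apply (closure_ge _ _ (orbit_plus a b 0 be umin umax (x0, yu 0)) lo q LY); auto. intros s hs. rewrite hlin2.
        destruct (orby (x0, yu 0) s lo eq_refl hs) as [t [K _]].
        assert (K1 := K ltac:(intros v hv; assert (X := F1 v hv); nra)). simpl in K1.
        assert (0 < exp (- b * t)) by apply exp_pos. nra.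
      * rewrite <- (hlin2 q). apply (closure_le _ _ (orbit_plus a b 0 be umin umax (x0, yu 0)) hi q LY); auto. intros s hs. rewrite hlin2.
        destruct (orby (x0, yu 0) s hi eq_refl hs) as [t [_ K]].
        assert (K1 := K ltac:(intros v hv; assert (X := F1 v hv); nra)). simpl in K1.
        assert (0 < exp (- b * t)) by apply exp_pos. nra.
  - assert (bp : 0 < b) by (destruct bp'; auto; subst; contradiction).
    exists (fun y => lo < y < hi). split; [|split; [|split; [|split]]].
    + intros y1 y2 y h1 h2 h3. lra.
    + exists (Rabs lo + Rabs hi). intros y hy. unfold Rabs. repeat destruct Rcase_abs; lra.
    + exists ((lo + hi) / 2), ((hi - lo) / 2). split; [lra|]. intros y hy. apply Rabs_def2 in hy. lra.
    + rewrite <- Fy0. lra.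
    + assert (pre : pre_control_set a b 0 be umin umax (fun p => fst p = x0 /\ lo < snd p < hi)).
      { split; [|split].
        - intros p [hp _]. unfold inG. lra.
        - intros [px py] [hp hy]. simpl in hp, hy. subst px. destruct (F2 py ltac:(lra)) as [v [hv ev]].
          destruct (flowsol v py hv) as [A S].
          exists (fun _ => v), (fun t => (x0, yu v + (py - yu v) * exp (b * t))). split; [exact A|split; [exact S|]].
          intros t _. simpl. rewrite ev. split; auto. replace (py + (py - py) * exp (b * t)) with py by ring. auto.
        - intros [px py] [hp hy] [qx qy] [hq hqy]. simpl in *. subst px qx.
          apply orbit_closure; [|unfold inG; simpl; lra].
          destruct (Rle_or_lt py qy) as [h|h].
          + destruct (F2 lo ltac:(lra)) as [v [hv ev]].
            set (R0 := (qy - lo) / (py - lo)).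
            assert (hR : 1 <= R0) by (unfold R0; apply (Rmult_le_reg_r (py - lo)); [lra|]; field_simplify; lra).
            assert (hl : 0 <= ln R0) by (rewrite <- ln_1; apply ln_le; lra).
            assert (F := flow v py (ln R0 / b) hv ltac:(apply Rdiv_le_0_compat; lra)).
            replace (b * (ln R0 / b)) with (ln R0) in F by (field; lra). rewrite exp_ln in F by lra.
            rewrite ev in F. unfold R0 in F. replace (lo + (py - lo) * ((qy - lo) / (py - lo))) with qy in F by (field; lra). exact F.
          + destruct (F2 hi ltac:(lra)) as [v [hv ev]].
            set (R0 := (hi - qy) / (hi - py)).
            assert (hR : 1 <= R0) by (unfold R0; apply (Rmult_le_reg_r (hi - py)); [lra|]; field_simplify; lra).
            assert (hl : 0 <= ln R0) by (rewrite <- ln_1; apply ln_le; lra).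
            assert (F := flow v py (ln R0 / b) hv ltac:(apply Rdiv_le_0_compat; lra)).
            replace (b * (ln R0 / b)) with (ln R0) in F by (field; lra). rewrite exp_ln in F by lra.
            rewrite ev in F. unfold R0 in F. replace (hi + (py - hi) * ((hi - qy) / (hi - py))) with qy in F by (field; lra). exact F. }
      split; auto.
      intros D [hG [hi' hii]] hsub q hq.
      assert (hp0 : D (x0, yu 0)) by (apply hsub; simpl; split; [auto|lra]).
      assert (hcl := hii (x0, yu 0) hp0 q hq).
      assert (X1 := closure_ge _ _ (orbit_plus a b 0 be umin umax (x0, yu 0)) x0 q LX ltac:(intros s hs; rewrite hlin, (orbx (x0, yu 0) s eq_refl hs); lra) hcl).
      assert (X2 := closure_le _ _ (orbit_plus a b 0 be umin umax (x0, yu 0)) x0 q LX ltac:(intros s hs; rewrite hlin, (orbx (x0, yu 0) s eq_refl hs); lra) hcl).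
      rewrite hlin in X1, X2. assert (hqx : fst q = x0) by lra. split; auto.
      assert (hcl2 := hii q hq (x0, yu 0) hp0).
      split.
      * destruct (Rlt_or_le lo (snd q)) as [h|h]; auto. exfalso.
        assert (X := closure_le _ _ (orbit_plus a b 0 be umin umax q) lo (x0, yu 0) LY ltac:(intros s hs; rewrite hlin2;
          destruct (orby q s lo hqx hs) as [t [_ K]];
          assert (K1 := K ltac:(intros v hv; assert (X := F1 v hv); nra));
          assert (0 < exp (- b * t)) by apply exp_pos; nra) hcl2).
        rewrite hlin2 in X. simpl in X. lra.
      * destruct (Rlt_or_le (snd q) hi) as [h|h]; auto. exfalso.
        assert (X := closure_ge _ _ (orbit_plus a b 0 be umin umax q) hi (x0, yu 0) LY ltac:(intros s hs; rewrite hlin2;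
          destruct (orby q s hi hqx hs) as [t [K _]];
          assert (K1 := K ltac:(intros v hv; assert (X := F1 v hv); nra));
          assert (0 < exp (- b * t)) by apply exp_pos; nra) hcl2).
        rewrite hlin2 in X. simpl in X. lra.
Qed.

Lemma part4 (umin umax a b al be : R) (humin : umin < 0) (humax : 0 < umax) :
  al * (a * al + b * be) <> 0 -> b = 0 ->
     is_control_set a b al be umin umax inG /\
     forall C, is_control_set a b al be umin umax C -> set_eq C inG.
Proof.
  intros hc hb. subst b.
  assert (hal : al <> 0) by (intro e; apply hc; rewrite e; ring).
  assert (ha : a <> 0) by (intro e; apply hc; rewrite e; ring).
  assert (wait : forall x y tau, 0 <= tau -> orbit_plus a 0 al be umin umax (x, y) (x, y + a * (x - 1) * tau)).
  { intros x y tau ht.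
    apply (const_orbit a 0 al be umin umax 0 (x, y) (fun _ => x) (fun t => y + a * (x - 1) * t)); auto; try lra.
    - simpl. ring.
    - intros s. auto_derive; auto. ring.
    - intros s. auto_derive; auto. ring. }
  assert (transit : forall xs xe, 0 < xs -> 0 < xe -> exists D, forall y,
             orbit_plus a 0 al be umin umax (xs, y) (xe, y + D)).
  { intros xs xe hs he. set (l := ln (xe / xs)).
    assert (hl : exp l = xe / xs) by (unfold l; apply exp_ln; apply Rdiv_lt_0_compat; auto).
    assert (key : forall v, umin <= v <= umax -> v * al <> 0 -> 0 <= l / (v * al) ->
               exists D, forall y, orbit_plus a 0 al be umin umax (xs, y) (xe, y + D)).
    { intros v hv hne ht. assert (hv0 : v <> 0) by (intro e; apply hne; rewrite e; ring).
      exists ((a + v * be) * xs * (exp (v * al * (l / (v * al))) - 1) / (v * al) - a * (l / (v * al))).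
      intros y.
      assert (F := const_orbit a 0 al be umin umax v (xs, y) (fun t => xs * exp (v * al * t))
          (fun t => y + (a + v * be) * xs * (exp (v * al * t) - 1) / (v * al) - a * t) hv).
      simpl in F. assert (X := F ltac:(rewrite Rmult_0_r, exp_0; ring) ltac:(rewrite Rmult_0_r, exp_0; field; auto)
          ltac:(intros s; auto_derive; auto; ring) ltac:(intros s; auto_derive; auto; field; auto) _ ht).
      replace (xs * exp (v * al * (l / (v * al)))) with xe in X.
      + replace (y + (a + v * be) * xs * (exp (v * al * (l / (v * al))) - 1) / (v * al) - a * (l / (v * al)))
          with (y + ((a + v * be) * xs * (exp (v * al * (l / (v * al))) - 1) / (v * al) - a * (l / (v * al)))) in X by ring.
        exact X.
      + replace (v * al * (l / (v * al))) with l by (field; auto). rewrite hl. field. lra. }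
    destruct (Rle_or_lt 0 l) as [h|h].
    - destruct (u_up al umin umax humin humax hal) as [v [hv hv2]].
      apply (key v hv); [lra|]. apply Rdiv_le_0_compat; auto.
    - destruct (u_dn al umin umax humin humax hal) as [v [hv hv2]].
      apply (key v hv); [lra|].
      assert (0 < l / (v*al)); [|lra].
      assert (v <> 0) by (intro e; rewrite e in hv2; lra).
      replace (l/(v*al)) with ((-l)/(-(v*al))) by (field; auto). apply Rdiv_lt_0_compat; lra. }
  assert (ctrl : forall p q, inG p -> inG q -> orbit_plus a 0 al be umin umax p q).
  { intros [x0 y0] [x1 y1] hp hq. unfold inG in *; simpl in *.
    destruct (transit x0 2 hp ltac:(lra)) as [D1 H1].
    destruct (transit 2 (1/2) ltac:(lra) ltac:(lra)) as [D2 H2].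
    destruct (transit (1/2) x1 ltac:(lra) hq) as [D3 H3].
    set (L := y1 - y0 - D1 - D2 - D3).
    assert (gen : forall t1 t2, 0 <= t1 -> 0 <= t2 -> a * t1 - a / 2 * t2 = L -> orbit_plus a 0 al be umin umax (x0, y0) (x1, y1)).
    { intros t1 t2 h1 h2 e.
      eapply orbit_trans; [apply (H1 y0)|].
      eapply orbit_trans; [apply (wait 2 (y0 + D1) t1 h1)|].
      eapply orbit_trans; [apply (H2 (y0 + D1 + a * (2 - 1) * t1))|].
      eapply orbit_trans; [apply (wait (1/2) (y0 + D1 + a * (2 - 1) * t1 + D2) t2 h2)|].
      replace y1 with (y0 + D1 + a * (2 - 1) * t1 + D2 + a * (1 / 2 - 1) * t2 + D3) by (unfold L in e; lra).
      apply H3. }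
    destruct (Rle_or_lt 0 (a * L)) as [h|h].
    - apply (gen (L / a) 0); try lra.
      + replace (L / a) with ((a * L) / (a * a)) by (field; auto). apply Rdiv_le_0_compat; auto.
        assert (0 < a * a) by (apply (Rsqr_pos_lt a ha)). lra.
      + field. auto.
    - apply (gen 0 (- 2 * L / a)); try lra.
      + replace (- 2 * L / a) with (- 2 * (a * L) / (a * a)) by (field; auto). apply Rdiv_le_0_compat; [lra|].
        apply (Rsqr_pos_lt a ha).
      + field. auto. }
  apply unique_cs.
  - split; [|split].
    + intros p hp; auto.
    + intros [x0 y0] hp. unfold inG in hp. simpl in hp.
      destruct (const_sol a 0 al be umin umax 0 (x0, y0) (fun _ => x0) (fun t => y0 + a * (x0 - 1) * t)
         ltac:(lra) eq_refl ltac:(simpl; ring) ltac:(intros s; auto_derive; auto; ring) ltac:(intros s; auto_derive; auto; ring)) as [A S].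
      exists (fun _ => 0), (fun t => (x0, y0 + a * (x0 - 1) * t)). split; [exact A|split; [exact S|]].
      intros t _. unfold inG. simpl. auto.
    + intros p hp q hq. apply orbit_closure; auto.
  - intros D [hG _] p hp. apply hG; auto.
Qed.

Definition cc a b al be := a + b * be / al.
Definition Zf a b al be (p : pt) := (snd p - a / b - be / al * fst p) / cc a b al be.
Definition Lam a b al be w (p : pt) := fst p + (b - w) * Zf a b al be p.
Definition Pt a b al be x r : pt := (x, a / b + be / al * x + cc a b al be * r * x).
Definition Jo b m M r := 0 < b * (1 + (b - M) * r) /\ b * (1 + (b - m) * r) < 0.
Definition Cint a b al be m M (p : pt) := 0 < fst p /\ 0 < b * Lam a b al be M p /\ b * Lam a b al be m p < 0.

Lemma Zf_Pt a b al be x r : cc a b al be <> 0 -> Zf a b al be (Pt a b al be x r) = r * x.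
Proof. intros h. unfold Zf, Pt. simpl.
  replace (a / b + be / al * x + cc a b al be * r * x - a / b - be / al * x) with (cc a b al be * (r * x)) by ring.
  field. auto. Qed.
Lemma Lam_Pt a b al be w x r : cc a b al be <> 0 -> Lam a b al be w (Pt a b al be x r) = x * (1 + (b - w) * r).
Proof. intros h. unfold Lam. rewrite Zf_Pt by auto. unfold Pt. simpl. ring. Qed.
Lemma Pt_id a b al be p : al <> 0 -> b <> 0 -> cc a b al be <> 0 -> 0 < fst p -> Pt a b al be (fst p) (Zf a b al be p / fst p) = p.
Proof. intros h1 h2 h hp. destruct p as [x y]. unfold Pt, Zf. simpl in *. f_equal.
  replace (cc a b al be * ((y - a / b - be / al * x) / cc a b al be / x) * x) with (y - a / b - be / al * x) by (field; repeat split; try assumption; lra).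
  ring. Qed.
Lemma Zf_lin a b al be p : Zf a b al be p = lin (- (be / al) / cc a b al be) (1 / cc a b al be) (- (a / b) / cc a b al be) p.
Proof. unfold Zf, lin, Rdiv. ring. Qed.
Lemma Lam_lin a b al be w p : Lam a b al be w p =
  lin (1 + (b - w) * (- (be / al) / cc a b al be)) ((b - w) * (1 / cc a b al be)) ((b - w) * (- (a / b) / cc a b al be)) p.
Proof. unfold Lam. rewrite Zf_lin. unfold lin. ring. Qed.

Lemma Cint_Pt a b al be m M x r : cc a b al be <> 0 -> 0 < x -> (Cint a b al be m M (Pt a b al be x r) <-> Jo b m M r).
Proof.
  intros h hx. unfold Cint, Jo. rewrite !Lam_Pt by auto. unfold Pt at 1. simpl. split.
  - intros [_ [h1 h2]]. split.
    + apply (Rmult_lt_reg_l x); auto. rewrite Rmult_0_r. nra.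
    + apply (Rmult_lt_reg_l x); auto. rewrite Rmult_0_r. nra.
  - intros [h1 h2]. split; [auto|split]; nra.
Qed.

Lemma Jo_rw b m M w : m < w < M -> b * (w - b) < 0 -> Jo b m M (1 / (w - b)).
Proof.
  intros [h1 h2] h3. assert (hw : w - b <> 0) by (intro e; rewrite e in h3; lra).
  unfold Jo. set (r := 1 / (w - b)). assert (hr : r * (w - b) = 1) by (unfold r; field; auto).
  assert (hbr : b * r < 0).
  { replace (b * r) with (b * (w - b) * (r * r)) by (unfold r; field; auto).
    assert (0 < r * r) by (apply Rsqr_pos_lt; intro e; rewrite e in hr; lra). nra. }
  replace (b * (1 + (b - M) * r)) with (b * r * (w - M)) by (unfold r; field; auto).
  replace (b * (1 + (b - m) * r)) with (b * r * (w - m)) by (unfold r; field; auto).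
  split; nra.
Qed.



Lemma flow5 a b al be umin umax w x0 r0 : umin <= umax -> al <> 0 -> b <> 0 -> cc a b al be <> 0 ->
  wmin al umin umax <= w <= wmax al umin umax -> w - b <> 0 ->
  admissible umin umax (fun _ => w / al) /\
  is_solution a b al be (fun _ => w / al) (Pt a b al be x0 r0)
    (fun t => Pt a b al be (x0 * exp (w * t)) (1 / (w - b) + (r0 - 1 / (w - b)) * exp ((b - w) * t))).
Proof.
  intros hu hal hb hc hw hwb.
  apply (const_sol a b al be umin umax (w / al) (Pt a b al be x0 r0) (fun t => x0 * exp (w * t))
     (fun t => a / b + be / al * (x0 * exp (w * t)) + cc a b al be * (1 / (w - b) + (r0 - 1 / (w - b)) * exp ((b - w) * t)) * (x0 * exp (w * t)))).
  - apply w_to_u; auto.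
  - unfold Pt. simpl. rewrite Rmult_0_r, exp_0. ring.
  - unfold Pt. simpl. rewrite !Rmult_0_r, exp_0. field. auto.
  - intros t. auto_derive; auto. field. auto.
  - intros t. unfold cc. auto_derive; auto. field. repeat split; auto.
Qed.

Lemma flow5_orbit a b al be umin umax w x0 r0 t : umin <= umax -> al <> 0 -> b <> 0 -> cc a b al be <> 0 ->
  wmin al umin umax <= w <= wmax al umin umax -> w - b <> 0 -> 0 <= t ->
  orbit_plus a b al be umin umax (Pt a b al be x0 r0)
    (Pt a b al be (x0 * exp (w * t)) (1 / (w - b) + (r0 - 1 / (w - b)) * exp ((b - w) * t))).
Proof.
  intros hu hal hb hc hw hwb ht. destruct (flow5 a b al be umin umax w x0 r0) as [A S]; auto.
  exists (fun _ => w / al), (fun t => Pt a b al be (x0 * exp (w * t)) (1 / (w - b) + (r0 - 1 / (w - b)) * exp ((b - w) * t))), t.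
  split; [exact A|split; [exact S|split; [lra|reflexivity]]].
Qed.

Lemma wait5 a b al be umin umax w x0 t : umin <= umax -> al <> 0 -> b <> 0 -> cc a b al be <> 0 ->
  wmin al umin umax <= w <= wmax al umin umax -> w - b <> 0 -> 0 <= t ->
  orbit_plus a b al be umin umax (Pt a b al be x0 (1 / (w - b))) (Pt a b al be (x0 * exp (w * t)) (1 / (w - b))).
Proof.
  intros. assert (F := flow5_orbit a b al be umin umax w x0 (1 / (w - b)) t); auto.
  replace (1 / (w - b) + (1 / (w - b) - 1 / (w - b)) * exp ((b - w) * t)) with (1 / (w - b)) in F by ring. auto.
Qed.

Lemma div_0_r x : x / 0 = 0.
Proof. unfold Rdiv. rewrite Rinv_0. ring. Qed.

Lemma transit5 a b al be umin umax w r0 r1 : umin <= umax -> al <> 0 -> b <> 0 -> cc a b al be <> 0 ->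
  wmin al umin umax <= w <= wmax al umin umax -> w - b <> 0 ->
  0 < (r1 - 1 / (w - b)) / (r0 - 1 / (w - b)) ->
  0 <= ln ((r1 - 1 / (w - b)) / (r0 - 1 / (w - b))) / (b - w) ->
  exists al0, forall x0, orbit_plus a b al be umin umax (Pt a b al be x0 r0) (Pt a b al be (x0 * exp al0) r1).
Proof.
  intros hu hal hb hc hw hwb hR ht. set (rw := 1 / (w - b)) in *. set (R := (r1 - rw) / (r0 - rw)) in *.
  assert (hne : r0 - rw <> 0) by (intro e; unfold R in hR; rewrite e, div_0_r in hR; lra).
  exists (w * (ln R / (b - w))). intros x0.
  assert (F := flow5_orbit a b al be umin umax w x0 r0 (ln R / (b - w)) hu hal hb hc hw hwb ht).
  fold rw in F.
  replace ((b - w) * (ln R / (b - w))) with (ln R) in F by (field; lra).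
  rewrite exp_ln in F by auto. unfold R in F.
  replace (rw + (r0 - rw) * ((r1 - rw) / (r0 - rw))) with r1 in F by (field; auto). exact F.
Qed.

Lemma ln_nonpos R : 0 < R <= 1 -> ln R <= 0.
Proof. intros [h1 h2]. rewrite <- ln_1. apply ln_le; auto. Qed.
Lemma ln_nonneg R : 1 <= R -> 0 <= ln R.
Proof. intros h. rewrite <- ln_1. apply ln_le; lra. Qed.
Lemma div_nn x y : x <= 0 -> y < 0 -> 0 <= x / y.
Proof. intros. replace (x / y) with ((-x) / (-y)) by (field; lra). apply Rdiv_le_0_compat; lra. Qed.

Lemma move5 a b al be umin umax r0 r1 : umin < 0 -> 0 < umax -> al <> 0 -> b <> 0 -> cc a b al be <> 0 ->
  (b < 0 /\ Jo b (wmin al umin umax) (wmax al umin umax) r1 \/ 0 < b /\ Jo b (wmin al umin umax) (wmax al umin umax) r0) ->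
  exists al0, forall x0, orbit_plus a b al be umin umax (Pt a b al be x0 r0) (Pt a b al be (x0 * exp al0) r1).
Proof.
  intros hmin hmax hal hb hc H.
  set (m := wmin al umin umax) in *. set (M := wmax al umin umax) in *.
  assert (hm : m < 0) by (apply wmin_neg; auto). assert (hM : 0 < M) by (apply wmax_pos; auto).
  assert (hu : umin <= umax) by lra.
  destruct H as [[bn [J1 J2]]|[bp [J1 J2]]].
  - assert (h1 : 1 + (b - M) * r1 < 0) by nra. assert (h2 : 0 < 1 + (b - m) * r1) by nra.
    assert (r1p : 0 < r1) by nra.
    set (w1 := b + 1 / r1).
    assert (hw1 : r1 * (w1 - b) = 1) by (unfold w1; field; lra).
    assert (w1b : b < w1) by (unfold w1; assert (0 < 1 / r1) by (apply Rdiv_lt_0_compat; lra); lra).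
    assert (w1M : w1 < M) by nra. assert (w1m : m < w1) by nra.
    destruct (Rlt_or_le r0 r1) as [lt|ge].
    + set (w := (w1 + Rmax b m) / 2).
      assert (hmx1 : b <= Rmax b m) by apply Rmax_l. assert (hmx2 : m <= Rmax b m) by apply Rmax_r.
      assert (hmx3 : Rmax b m < w1) by (unfold Rmax; destruct (Rle_dec b m); lra).
      assert (hw : b < w < w1) by (unfold w; lra). assert (hw' : Rmax b m < w) by (unfold w; lra).
      set (rw := 1 / (w - b)). assert (hrw : rw * (w - b) = 1) by (unfold rw; field; lra).
      assert (rwr1 : r1 < rw) by nra.
      assert (hwr : wmin al umin umax <= w <= wmax al umin umax) by (change (m <= w <= M); lra).
      assert (hwb : w - b <> 0) by lra.
      apply (transit5 a b al be umin umax w r0 r1 hu hal hb hc hwr hwb).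
      * fold rw. replace ((r1 - rw) / (r0 - rw)) with ((rw - r1) / (rw - r0)) by (field; lra). apply Rdiv_lt_0_compat; lra.
      * fold rw. apply div_nn; [|lra]. apply ln_nonpos. split.
        -- replace ((r1 - rw) / (r0 - rw)) with ((rw - r1) / (rw - r0)) by (field; lra). apply Rdiv_lt_0_compat; lra.
        -- replace ((r1 - rw) / (r0 - rw)) with ((rw - r1) / (rw - r0)) by (field; lra).
           apply (Rmult_le_reg_r (rw - r0)); [lra|]. field_simplify; lra.
    + set (w := (w1 + M) / 2).
      assert (hw : w1 < w < M) by (unfold w; lra).
      set (rw := 1 / (w - b)). assert (hrw : rw * (w - b) = 1) by (unfold rw; field; lra).
      assert (rwr1 : rw < r1) by nra. assert (rwp : 0 < rw) by nra.
      assert (hwr : wmin al umin umax <= w <= wmax al umin umax) by (change (m <= w <= M); lra).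
      assert (hwb : w - b <> 0) by lra.
      apply (transit5 a b al be umin umax w r0 r1 hu hal hb hc hwr hwb).
      * fold rw. apply Rdiv_lt_0_compat; lra.
      * fold rw. apply div_nn; [|lra]. apply ln_nonpos. split.
        -- apply Rdiv_lt_0_compat; lra.
        -- apply (Rmult_le_reg_r (r0 - rw)); [lra|]. field_simplify; lra.
  - assert (h1 : 0 < 1 + (b - M) * r0) by nra. assert (h2 : 1 + (b - m) * r0 < 0) by nra.
    assert (r0n : r0 < 0) by nra.
    set (w0 := b + 1 / r0).
    assert (hw0 : r0 * (w0 - b) = 1) by (unfold w0; field; lra).
    assert (w0b : w0 < b) by (unfold w0; assert (0 < 1 / - r0) by (apply Rdiv_lt_0_compat; lra);
       replace (1 / r0) with (- (1 / - r0)) by (field; lra); lra).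
    assert (w0M : w0 < M) by nra. assert (w0m : m < w0) by nra.
    destruct (Rle_or_lt r0 r1) as [le|gt].
    + set (w := (w0 + Rmin b M) / 2).
      assert (hmx1 : Rmin b M <= b) by apply Rmin_l. assert (hmx2 : Rmin b M <= M) by apply Rmin_r.
      assert (hmx3 : w0 < Rmin b M) by (unfold Rmin; destruct (Rle_dec b M); lra).
      assert (hw : w0 < w < b) by (unfold w; lra). assert (hw' : w < Rmin b M) by (unfold w; lra).
      set (rw := 1 / (w - b)). assert (hrw : rw * (w - b) = 1) by (unfold rw; field; lra).
      assert (rwr0 : rw < r0) by nra.
      assert (hwr : wmin al umin umax <= w <= wmax al umin umax) by (change (m <= w <= M); lra).
      assert (hwb : w - b <> 0) by lra.
      apply (transit5 a b al be umin umax w r0 r1 hu hal hb hc hwr hwb).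
      * fold rw. apply Rdiv_lt_0_compat; lra.
      * fold rw. apply Rdiv_le_0_compat; [|lra]. apply ln_nonneg.
        apply (Rmult_le_reg_r (r0 - rw)); [lra|]. field_simplify; lra.
    + set (w := (m + w0) / 2).
      assert (hw : m < w < w0) by (unfold w; lra).
      set (rw := 1 / (w - b)). assert (hrw : rw * (w - b) = 1) by (unfold rw; field; lra).
      assert (rwr0 : r0 < rw) by nra.
      assert (hwr : wmin al umin umax <= w <= wmax al umin umax) by (change (m <= w <= M); lra).
      assert (hwb : w - b <> 0) by lra.
      apply (transit5 a b al be umin umax w r0 r1 hu hal hb hc hwr hwb).
      * fold rw. replace ((r1 - rw) / (r0 - rw)) with ((rw - r1) / (rw - r0)) by (field; lra). apply Rdiv_lt_0_compat; lra.
      * fold rw. apply Rdiv_le_0_compat; [|lra]. apply ln_nonneg.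
        replace ((r1 - rw) / (r0 - rw)) with ((rw - r1) / (rw - r0)) by (field; lra).
        apply (Rmult_le_reg_r (rw - r0)); [lra|]. field_simplify; lra.
Qed.

Lemma ctrl_core a b al be umin umax wa wb : umin < 0 -> 0 < umax -> al <> 0 -> b <> 0 -> cc a b al be <> 0 ->
  wmin al umin umax < wa < wmax al umin umax -> wmin al umin umax < wb < wmax al umin umax ->
  b * (wa - b) < 0 -> b * (wb - b) < 0 -> 0 < wa -> wb < 0 ->
  forall p q, 0 < fst p -> Cint a b al be (wmin al umin umax) (wmax al umin umax) q ->
  (b < 0 \/ Cint a b al be (wmin al umin umax) (wmax al umin umax) p) ->
  orbit_plus a b al be umin umax p q.
Proof.
  intros hmin hmax hal hb hc hwa hwb hba hbb wap wbn p q hp hq hpc.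
  set (m := wmin al umin umax) in *. set (M := wmax al umin umax) in *.
  assert (hu : umin <= umax) by lra.
  assert (hq0 : 0 < fst q) by (destruct hq; auto).
  rewrite <- (Pt_id a b al be p) by auto. rewrite <- (Pt_id a b al be q) by auto.
  set (x0 := fst p). set (x1 := fst q). set (r0 := Zf a b al be p / fst p). set (r1 := Zf a b al be q / fst q).
  assert (J1 : Jo b m M r1) by (apply (Cint_Pt a b al be m M x1 r1 hc hq0); unfold x1, r1; rewrite Pt_id; auto).
  assert (J0 : 0 < b -> Jo b m M r0).
  { intros bp. destruct hpc as [h|h]; [lra|]. apply (Cint_Pt a b al be m M x0 r0 hc hp); unfold x0, r0; rewrite Pt_id; auto. }
  set (ra := 1 / (wa - b)). set (rb := 1 / (wb - b)).
  assert (Ja : Jo b m M ra) by (apply Jo_rw; auto). assert (Jb : Jo b m M rb) by (apply Jo_rw; auto).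
  assert (bcase : b < 0 \/ 0 < b) by (destruct (Rlt_or_le b 0) as [h|h]; [left; auto|right; destruct h as [h|h]; [auto|exfalso; apply hb; symmetry; auto]]).
  destruct (move5 a b al be umin umax r0 ra hmin hmax hal hb hc ltac:(destruct bcase; [left|right]; auto)) as [a1 M1].
  destruct (move5 a b al be umin umax ra rb hmin hmax hal hb hc ltac:(destruct bcase; [left|right]; auto)) as [a2 M2].
  destruct (move5 a b al be umin umax rb r1 hmin hmax hal hb hc ltac:(destruct bcase; [left|right]; auto)) as [a3 M3].
  assert (wa_r : m <= wa <= M) by lra. assert (wb_r : m <= wb <= M) by lra.
  assert (wab : wa - b <> 0) by (intro e; rewrite e in hba; lra).
  assert (wbb : wb - b <> 0) by (intro e; rewrite e in hbb; lra).
  set (L := ln (x1 / x0) - a1 - a2 - a3).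
  assert (gen : forall t1 t2, 0 <= t1 -> 0 <= t2 -> wa * t1 + wb * t2 = L ->
     orbit_plus a b al be umin umax (Pt a b al be x0 r0) (Pt a b al be x1 r1)).
  { intros t1 t2 h1 h2 e.
    eapply orbit_trans; [apply (M1 x0)|].
    eapply orbit_trans; [apply (wait5 a b al be umin umax wa (x0 * exp a1) t1); auto|].
    eapply orbit_trans; [apply (M2 (x0 * exp a1 * exp (wa * t1)))|].
    eapply orbit_trans; [apply (wait5 a b al be umin umax wb (x0 * exp a1 * exp (wa * t1) * exp a2) t2); auto|].
    replace x1 with (x0 * exp a1 * exp (wa * t1) * exp a2 * exp (wb * t2) * exp a3).
    - apply M3.
    - rewrite !Rmult_assoc, <- !exp_plus.
      replace (a1 + (wa * t1 + (a2 + (wb * t2 + a3)))) with (ln (x1 / x0)) by (unfold L in e; lra).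
      rewrite exp_ln by (apply Rdiv_lt_0_compat; auto). field. unfold x0; lra. }
  destruct (Rle_or_lt 0 L) as [h|h].
  - apply (gen (L / wa) 0); [apply Rdiv_le_0_compat; lra|lra|field; lra].
  - apply (gen 0 (L / wb)); [lra|apply div_nn; lra|field; lra].
Qed.

Lemma ctrl5 a b al be umin umax : umin < 0 -> 0 < umax -> al <> 0 -> b <> 0 -> cc a b al be <> 0 ->
  forall p q, 0 < fst p -> Cint a b al be (wmin al umin umax) (wmax al umin umax) q ->
  (b < 0 \/ Cint a b al be (wmin al umin umax) (wmax al umin umax) p) ->
  orbit_plus a b al be umin umax p q.
Proof.
  intros hmin hmax hal hb hc.
  assert (hm : wmin al umin umax < 0) by (apply wmin_neg; auto).
  assert (hM : 0 < wmax al umin umax) by (apply wmax_pos; auto).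
  destruct (Rlt_or_le 0 b) as [bp|bn].
  - assert (h1 : Rmin b (wmax al umin umax) <= b) by apply Rmin_l.
    assert (h2 : Rmin b (wmax al umin umax) <= wmax al umin umax) by apply Rmin_r.
    assert (h3 : 0 < Rmin b (wmax al umin umax)) by (apply Rmin_pos; lra).
    apply (ctrl_core a b al be umin umax (Rmin b (wmax al umin umax) / 2) (wmin al umin umax / 2)); auto; try lra; nra.
  - assert (bn' : b < 0) by (destruct bn as [h|h]; [auto|exfalso; apply hb; auto]).
    assert (h1 : b <= Rmax b (wmin al umin umax)) by apply Rmax_l.
    assert (h2 : wmin al umin umax <= Rmax b (wmin al umin umax)) by apply Rmax_r.
    assert (h3 : Rmax b (wmin al umin umax) < 0) by (unfold Rmax; destruct (Rle_dec _ _); lra).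
    apply (ctrl_core a b al be umin umax (wmax al umin umax / 2) (Rmax b (wmin al umin umax) / 2)); auto; try lra; nra.
Qed.

Definition ZA a b al be := - (be / al) / cc a b al be.
Definition ZB a b al be := 1 / cc a b al be.
Definition ZC a b al be := - (a / b) / cc a b al be.

Lemma Zf_lin' a b al be p : Zf a b al be p = lin (ZA a b al be) (ZB a b al be) (ZC a b al be) p.
Proof. apply Zf_lin. Qed.
Lemma Lam_lin' a b al be w p : Lam a b al be w p =
  lin (1 + (b - w) * ZA a b al be) ((b - w) * ZB a b al be) ((b - w) * ZC a b al be) p.
Proof. apply Lam_lin. Qed.

Lemma cc_nz a b al be : al <> 0 -> cc a b al be <> 0 -> a * al + b * be <> 0.
Proof. intros h1 h2 e. apply h2. unfold cc. field_simplify; auto. rewrite e. field. auto. Qed.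

Lemma Lam_lder a b al be u g w x : al <> 0 -> b <> 0 -> cc a b al be <> 0 ->
  lder a b al be u (1 + (b - w) * ZA a b al be) ((b - w) * ZB a b al be) ((b - w) * ZC a b al be) (- b) 0 g x
  = fst (g x) * (u x * al - w) * exp (- b * x).
Proof. intros h1 h2 h3. assert (h4 := cc_nz a b al be h1 h3). unfold lder, lin, ZA, ZB, ZC. unfold cc in *. field. repeat split; auto. Qed.

Lemma Z_lder a b al be u g sg d x : al <> 0 -> b <> 0 -> cc a b al be <> 0 ->
  lder a b al be u (sg * ZA a b al be) (sg * ZB a b al be) (sg * ZC a b al be) 0 (- d) g x
  = sg * (b * Zf a b al be (g x) + fst (g x)) - d.
Proof.
  intros h1 h2 h3. assert (h4 := cc_nz a b al be h1 h3). rewrite Zf_lin'. unfold lder, lin, ZA, ZB, ZC.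
  replace (exp (0 * x)) with 1 by (rewrite Rmult_0_l; symmetry; apply exp_0). unfold cc in *. field. repeat split; auto.
Qed.

Lemma LamE a b al be umin umax u p g w : al <> 0 -> b <> 0 -> cc a b al be <> 0 ->
  admissible umin umax u -> is_solution a b al be u p g -> 0 < fst p ->
  (w = wmin al umin umax -> forall s t, 0 <= s <= t ->
      Lam a b al be w (g s) * exp (- b * s) <= Lam a b al be w (g t) * exp (- b * t)) /\
  (w = wmax al umin umax -> forall s t, 0 <= s <= t ->
      Lam a b al be w (g t) * exp (- b * t) <= Lam a b al be w (g s) * exp (- b * s)).
Proof.
  intros h1 h2 h3 ha hs hp.
  assert (E : forall s, Lam a b al be w (g s) * exp (- b * s) =
     lfun (1 + (b - w) * ZA a b al be) ((b - w) * ZB a b al be) ((b - w) * ZC a b al be) (- b) 0 g s).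
  { intros s. unfold lfun. rewrite Lam_lin'. ring. }
  assert (xp := x_pos a b al be umin umax u p g ha hs hp).
  destruct ha as [hv hpw].
  split; intros hw s t [hs0 hst]; rewrite !E.
  - apply (lfun_mono a b al be umin umax u p g _ _ _ _ _ (fun x => 0 <= x) (conj hv hpw) hs); auto.
    + intros x hx _. rewrite Lam_lder by auto. assert (W := w_bounds al umin umax (u x) (hv x)).
      assert (X := proj2 (xp x hx)). assert (0 < exp (- b * x)) by apply exp_pos.
      apply Rmult_le_pos; [|lra]. apply Rmult_le_pos; lra.
    + intros x hx; lra.
  - assert (K : lfun (- (1 + (b - w) * ZA a b al be)) (- ((b - w) * ZB a b al be)) (- ((b - w) * ZC a b al be)) (- b) 0 g s <=
                lfun (- (1 + (b - w) * ZA a b al be)) (- ((b - w) * ZB a b al be)) (- ((b - w) * ZC a b al be)) (- b) 0 g t).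
    { apply (lfun_mono a b al be umin umax u p g _ _ _ _ _ (fun x => 0 <= x) (conj hv hpw) hs); auto.
      + intros x hx _.
        replace (lder a b al be u (- (1 + (b - w) * ZA a b al be)) (- ((b - w) * ZB a b al be)) (- ((b - w) * ZC a b al be)) (- b) 0 g x)
          with (- lder a b al be u (1 + (b - w) * ZA a b al be) ((b - w) * ZB a b al be) ((b - w) * ZC a b al be) (- b) 0 g x)
          by (unfold lder, lin; ring).
        rewrite Lam_lder by auto. assert (W := w_bounds al umin umax (u x) (hv x)).
        assert (X := proj2 (xp x hx)). assert (0 < exp (- b * x)) by apply exp_pos.
        assert (0 <= fst (g x) * (wmax al umin umax - u x * al) * exp (- b * x)) by (apply Rmult_le_pos; [apply Rmult_le_pos|]; lra).
        rewrite hw. lra.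
      + intros x hx; lra. }
    unfold lfun, lin in K |- *. lra.
Qed.

Lemma ZG a b al be umin umax u p g sg d : al <> 0 -> b <> 0 -> cc a b al be <> 0 ->
  admissible umin umax u -> is_solution a b al be u p g ->
  forall s t, s <= t -> (forall x, s < x < t -> d <= sg * (b * Zf a b al be (g x) + fst (g x))) ->
  sg * Zf a b al be (g s) - d * s <= sg * Zf a b al be (g t) - d * t.
Proof.
  intros h1 h2 h3 ha hs s t hst H.
  assert (E : forall s, sg * Zf a b al be (g s) - d * s = lfun (sg * ZA a b al be) (sg * ZB a b al be) (sg * ZC a b al be) 0 (- d) g s).
  { intros s'. unfold lfun. rewrite Zf_lin'. unfold lin. replace (exp (0 * s')) with 1 by (rewrite Rmult_0_l; symmetry; apply exp_0). ring. }
  rewrite !E. apply (lfun_mono a b al be umin umax u p g _ _ _ _ _ (fun x => d <= sg * (b * Zf a b al be (g x) + fst (g x))) ha hs); auto.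
  intros x hx _. rewrite Z_lder by auto. lra.
Qed.

Lemma x_lower a b al be umin umax u p g : al <> 0 -> umin < 0 -> 0 < umax ->
  admissible umin umax u -> is_solution a b al be u p g -> 0 < fst p ->
  forall t, 0 <= t <= 1 -> fst p * exp (wmin al umin umax) <= fst (g t).
Proof.
  intros hal hmin hmax ha hs hp t ht. destruct (x_pos a b al be umin umax u p g ha hs hp t ltac:(lra)) as [X _].
  assert (hm := wmin_neg al umin umax hmin hmax hal).
  assert (exp (wmin al umin umax) <= exp (wmin al umin umax * t)).
  { destruct (Req_dec t 1) as [e|ne]; [subst; rewrite Rmult_1_r; lra|]. left. apply exp_increasing. nra. }
  assert (fst p * exp (wmin al umin umax) <= fst p * exp (wmin al umin umax * t)) by (apply Rmult_le_compat_l; lra).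
  lra.
Qed.

Lemma LZ a b al be w q : (b - w) * (b * Zf a b al be q + fst q) = b * Lam a b al be w q - w * fst q.
Proof. unfold Lam. ring. Qed.

Lemma lipf_ext (f g : pt -> R) K : (forall p, f p = g p) -> lipf g K -> lipf f K.
Proof. intros e [h1 h2]. split; auto. intros s q. rewrite !e. auto. Qed.

Lemma closedP_False : closedP (fun _ => False).
Proof. intros q H. destruct (H 1 Rlt_0_1) as [s [[] _]]. Qed.

Lemma Zgrow a b al be umin umax u p g (P : pt -> Prop) sg k : al <> 0 -> b <> 0 -> cc a b al be <> 0 ->
  umin < 0 -> 0 < umax -> 0 <= k ->
  (forall q, P q -> 0 < fst q -> k * fst q <= sg * (b * Zf a b al be q + fst q)) ->
  admissible umin umax u -> is_solution a b al be u p g -> 0 < fst p ->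
  (forall t, 0 <= t -> (forall tau, 0 <= tau <= t -> P (g tau)) -> sg * Zf a b al be p <= sg * Zf a b al be (g t)) /\
  (0 < k -> (forall tau, 0 <= tau <= 1 -> P (g tau)) -> sg * Zf a b al be p < sg * Zf a b al be (g 1)).
Proof.
  intros h1 h2 h3 hmin hmax hk HP ha hs hp.
  assert (h0 : g 0 = p) by (destruct hs; auto).
  assert (xp := x_pos a b al be umin umax u p g ha hs hp).
  split.
  - intros t ht HPt. assert (Z := ZG a b al be umin umax u p g sg 0 h1 h2 h3 ha hs 0 t ht).
    rewrite h0 in Z. assert (Z2 : sg * Zf a b al be p - 0 * 0 <= sg * Zf a b al be (g t) - 0 * t); [|lra].
    apply Z. intros x hx. assert (X := proj2 (xp x ltac:(lra))). assert (Y := HP (g x) (HPt x ltac:(lra)) X). nra.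
  - intros hk' HPt. set (d := k * (fst p * exp (wmin al umin umax))).
    assert (hd : 0 < d) by (unfold d; apply Rmult_lt_0_compat; auto; apply Rmult_lt_0_compat; auto; apply exp_pos).
    assert (Z := ZG a b al be umin umax u p g sg d h1 h2 h3 ha hs 0 1 ltac:(lra)).
    rewrite h0 in Z. assert (Z2 : sg * Zf a b al be p - d * 0 <= sg * Zf a b al be (g 1) - d * 1); [|lra].
    apply Z. intros x hx. assert (X := proj2 (xp x ltac:(lra))). assert (Y := HP (g x) (HPt x ltac:(lra)) X).
    assert (XL := x_lower a b al be umin umax u p g h1 hmin hmax ha hs hp x ltac:(lra)).
    unfold d. assert (k * (fst p * exp (wmin al umin umax)) <= k * fst (g x)) by (apply Rmult_le_compat_l; lra). lra.
Qed.

Definition C5 a b al be m M (p : pt) :=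
  if Rlt_dec 0 b then Cint a b al be m M p
  else (0 < fst p /\ Lam a b al be M p <= 0 /\ 0 <= Lam a b al be m p).

Lemma all5 a b al be umin umax : umin < 0 -> 0 < umax -> al <> 0 -> b <> 0 -> cc a b al be <> 0 ->
  forall D, pre_control_set a b al be umin umax D -> forall p, D p ->
  C5 a b al be (wmin al umin umax) (wmax al umin umax) p.
Proof.
  intros hmin hmax hal hb hc D hD p hp.
  set (m := wmin al umin umax) in *. set (M := wmax al umin umax) in *.
  assert (hm : m < 0) by (apply wmin_neg; auto). assert (hM : 0 < M) by (apply wmax_pos; auto).
  assert (hG : 0 < fst p) by (destruct hD as [h _]; apply h; auto).
  assert (LipZ : lipf (Zf a b al be) _) by (eapply lipf_ext; [apply Zf_lin'|apply lin_lipf]).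
  assert (LipZn : lipf (fun q => - Zf a b al be q) (Rabs (- ZA a b al be) + Rabs (- ZB a b al be))).
  { eapply lipf_ext; [|apply (lin_lipf (- ZA a b al be) (- ZB a b al be) (- ZC a b al be))].
    intros q. rewrite Zf_lin'. unfold lin. ring. }
  assert (LipL : forall w, lipf (Lam a b al be w) (Rabs (1 + (b - w) * ZA a b al be) + Rabs ((b - w) * ZB a b al be))) by (intros w; eapply lipf_ext; [apply Lam_lin'|apply lin_lipf]).
  assert (Linv_m : forall u g q, admissible umin umax u -> is_solution a b al be u q g -> inG q -> forall s t, 0 <= s <= t ->
     Lam a b al be m (g s) * exp (- b * s) <= Lam a b al be m (g t) * exp (- b * t)).
  { intros u g q hu hs hq. apply (proj1 (LamE a b al be umin umax u q g m hal hb hc hu hs hq)). auto. }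
  assert (Linv_M : forall u g q, admissible umin umax u -> is_solution a b al be u q g -> inG q -> forall s t, 0 <= s <= t ->
     Lam a b al be M (g t) * exp (- b * t) <= Lam a b al be M (g s) * exp (- b * s)).
  { intros u g q hu hs hq. apply (proj2 (LamE a b al be umin umax u q g M hal hb hc hu hs hq)). auto. }
  assert (ep : forall s, 0 < exp (- b * s)) by (intros; apply exp_pos).
  assert (e0 : exp (- b * 0) = 1) by (rewrite Rmult_0_r; apply exp_0).
  unfold C5. destruct (Rlt_dec 0 b) as [bp|bn].
  -
    assert (RA : 0 <= Lam a b al be m p -> False).
    { intros hgood.
      apply (no_pc a b al be umin umax (fun q => 0 <= Lam a b al be m q) (fun _ => False) (Zf a b al be) _ LipZ closedP_False) with (D := D) (p := p);
        auto.
      - intros u g q t hu hs hq ht hq2 _.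
        assert (gd : forall tau, 0 <= tau -> 0 <= Lam a b al be m (g tau)).
        { intros tau htau. assert (K := Linv_m u g q hu hs hq 0 tau ltac:(lra)). destruct hs as [h0 _]. rewrite h0, e0 in K.
          specialize (ep tau). nra. }
        assert (Zg := Zgrow a b al be umin umax u q g (fun q => 0 <= Lam a b al be m q) 1 (- m / (b - m)) hal hb hc hmin hmax
          ltac:(apply Rdiv_le_0_compat; lra) ltac:(intros q' hq' hx'; assert (E := LZ a b al be m q');
             apply (Rmult_le_reg_l (b - m)); [lra|]; replace ((b - m) * (- m / (b - m) * fst q')) with (- m * fst q') by (field; lra);
             rewrite Rmult_1_l, E; nra) hu hs hq).
        assert (X := proj1 Zg t ht ltac:(intros; apply gd; lra)). lra.
      - intros u g q hu hs hq hq2 _.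
        assert (gd : forall tau, 0 <= tau -> 0 <= Lam a b al be m (g tau)).
        { intros tau htau. assert (K := Linv_m u g q hu hs hq 0 tau ltac:(lra)). destruct hs as [h0 _]. rewrite h0, e0 in K.
          specialize (ep tau). nra. }
        assert (Zg := Zgrow a b al be umin umax u q g (fun q => 0 <= Lam a b al be m q) 1 (- m / (b - m)) hal hb hc hmin hmax
          ltac:(apply Rdiv_le_0_compat; lra) ltac:(intros q' hq' hx'; assert (E := LZ a b al be m q');
             apply (Rmult_le_reg_l (b - m)); [lra|]; replace ((b - m) * (- m / (b - m) * fst q')) with (- m * fst q') by (field; lra);
             rewrite Rmult_1_l, E; nra) hu hs hq).
        split; [|apply gd; lra].
        assert (X := proj2 Zg ltac:(apply Rdiv_lt_0_compat; lra) ltac:(intros; apply gd; lra)). lra. }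
    assert (hLm : Lam a b al be m p < 0) by (destruct (Rlt_or_le (Lam a b al be m p) 0); [auto|exfalso; auto]).
    assert (RB : Lam a b al be M p <= 0 -> False).
    { intros hgood.
      assert (bM : M < b).
      { unfold Lam in hgood, hLm. destruct (Rlt_or_le M b) as [h|h]; auto. exfalso.
        assert (Zf a b al be p < 0) by nra. nra. }
      apply (no_pc a b al be umin umax (fun q => Lam a b al be M q <= 0) (fun _ => False) (fun q => - Zf a b al be q) _ LipZn closedP_False) with (D := D) (p := p);
        auto.
      - intros u g q t hu hs hq ht hq2 _.
        assert (gd : forall tau, 0 <= tau -> Lam a b al be M (g tau) <= 0).
        { intros tau htau. assert (K := Linv_M u g q hu hs hq 0 tau ltac:(lra)). destruct hs as [h0 _]. rewrite h0, e0 in K.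
          specialize (ep tau). nra. }
        assert (Zg := Zgrow a b al be umin umax u q g (fun q => Lam a b al be M q <= 0) (-1) (M / (b - M)) hal hb hc hmin hmax
          ltac:(apply Rdiv_le_0_compat; lra) ltac:(intros q' hq' hx'; assert (E := LZ a b al be M q');
             apply (Rmult_le_reg_l (b - M)); [lra|]; replace ((b - M) * (M / (b - M) * fst q')) with (M * fst q') by (field; lra);
             nra) hu hs hq).
        assert (X := proj1 Zg t ht ltac:(intros; apply gd; lra)). lra.
      - intros u g q hu hs hq hq2 _.
        assert (gd : forall tau, 0 <= tau -> Lam a b al be M (g tau) <= 0).
        { intros tau htau. assert (K := Linv_M u g q hu hs hq 0 tau ltac:(lra)). destruct hs as [h0 _]. rewrite h0, e0 in K.
          specialize (ep tau). nra. }
        assert (Zg := Zgrow a b al be umin umax u q g (fun q => Lam a b al be M q <= 0) (-1) (M / (b - M)) hal hb hc hmin hmax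
          ltac:(apply Rdiv_le_0_compat; lra) ltac:(intros q' hq' hx'; assert (E := LZ a b al be M q');
             apply (Rmult_le_reg_l (b - M)); [lra|]; replace ((b - M) * (M / (b - M) * fst q')) with (M * fst q') by (field; lra);
             nra) hu hs hq).
        split; [|apply gd; lra].
        assert (X := proj2 Zg ltac:(apply Rdiv_lt_0_compat; lra) ltac:(intros; apply gd; lra)). lra. }
    assert (hLM : 0 < Lam a b al be M p) by (destruct (Rlt_or_le 0 (Lam a b al be M p)); [auto|exfalso; auto]).
    split; [auto|split; nra].
  - assert (bn' : b < 0) by (destruct (Rlt_or_le b 0) as [h|h]; [auto|exfalso; destruct h as [h|h]; [lra|apply hb; auto]]).
    assert (RC : 0 < Lam a b al be M p -> False).
    { intros hgood.
      apply (no_pc a b al be umin umax (fun q => 0 < Lam a b al be M q) (fun q => Lam a b al be M q <= 0) (Zf a b al be) _ LipZ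
        (closedP_le _ _ 0 (LipL M))) with (D := D) (p := p); auto.
      - intros u g q hu hs hq s t hst hB. assert (K := Linv_M u g q hu hs hq s t hst).
        assert (0 < exp (- b * s)) by apply ep. assert (0 < exp (- b * t)) by apply ep. nra.
      - intros u g q t hu hs hq ht hq2 hnb.
        assert (Zg := Zgrow a b al be umin umax u q g (fun q => 0 < Lam a b al be M q) 1 (M / (M - b)) hal hb hc hmin hmax
          ltac:(apply Rdiv_le_0_compat; lra) ltac:(intros q' hq' hx'; assert (E := LZ a b al be M q');
             apply (Rmult_le_reg_l (M - b)); [lra|]; replace ((M - b) * (M / (M - b) * fst q')) with (M * fst q') by (field; lra);
             nra) hu hs hq).
        assert (X := proj1 Zg t ht ltac:(intros tau htau; specialize (hnb tau htau); simpl in hnb; lra)). lra.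
      - intros u g q hu hs hq hq2 hnb.
        assert (Zg := Zgrow a b al be umin umax u q g (fun q => 0 < Lam a b al be M q) 1 (M / (M - b)) hal hb hc hmin hmax
          ltac:(apply Rdiv_le_0_compat; lra) ltac:(intros q' hq' hx'; assert (E := LZ a b al be M q');
             apply (Rmult_le_reg_l (M - b)); [lra|]; replace ((M - b) * (M / (M - b) * fst q')) with (M * fst q') by (field; lra);
             nra) hu hs hq).
        split; [|specialize (hnb 1 ltac:(lra)); simpl in hnb; lra].
        assert (X := proj2 Zg ltac:(apply Rdiv_lt_0_compat; lra) ltac:(intros tau htau; specialize (hnb tau htau); simpl in hnb; lra)). lra.
      - simpl. lra. }
    assert (hLM : Lam a b al be M p <= 0) by (destruct (Rlt_or_le 0 (Lam a b al be M p)); [exfalso; auto|auto]).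
    assert (RD : Lam a b al be m p < 0 -> False).
    { intros hgood.
      assert (bm : b < m).
      { unfold Lam in hgood, hLM. destruct (Rlt_or_le b m) as [h|h]; auto. exfalso.
        assert (0 < Zf a b al be p) by nra. nra. }
      apply (no_pc a b al be umin umax (fun q => Lam a b al be m q < 0) (fun q => 0 <= Lam a b al be m q) (fun q => - Zf a b al be q) _ LipZn
        (closedP_ge _ _ 0 (LipL m))) with (D := D) (p := p); auto.
      - intros u g q hu hs hq s t hst hB. assert (K := Linv_m u g q hu hs hq s t hst).
        assert (0 < exp (- b * s)) by apply ep. assert (0 < exp (- b * t)) by apply ep. nra.
      - intros u g q t hu hs hq ht hq2 hnb.
        assert (Zg := Zgrow a b al be umin umax u q g (fun q => Lam a b al be m q < 0) (-1) (- m / (m - b)) hal hb hc hmin hmax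
          ltac:(apply Rdiv_le_0_compat; lra) ltac:(intros q' hq' hx'; assert (E := LZ a b al be m q');
             apply (Rmult_le_reg_l (m - b)); [lra|]; replace ((m - b) * (- m / (m - b) * fst q')) with (- m * fst q') by (field; lra);
             nra) hu hs hq).
        assert (X := proj1 Zg t ht ltac:(intros tau htau; specialize (hnb tau htau); simpl in hnb; lra)). lra.
      - intros u g q hu hs hq hq2 hnb.
        assert (Zg := Zgrow a b al be umin umax u q g (fun q => Lam a b al be m q < 0) (-1) (- m / (m - b)) hal hb hc hmin hmax
          ltac:(apply Rdiv_le_0_compat; lra) ltac:(intros q' hq' hx'; assert (E := LZ a b al be m q');
             apply (Rmult_le_reg_l (m - b)); [lra|]; replace ((m - b) * (- m / (m - b) * fst q')) with (- m * fst q') by (field; lra);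
             nra) hu hs hq).
        split; [|specialize (hnb 1 ltac:(lra)); simpl in hnb; lra].
        assert (X := proj2 Zg ltac:(apply Rdiv_lt_0_compat; lra) ltac:(intros tau htau; specialize (hnb tau htau); simpl in hnb; lra)). lra.
      - simpl. lra. }
    assert (hLm : 0 <= Lam a b al be m p) by (destruct (Rlt_or_le (Lam a b al be m p) 0); [exfalso; auto|auto]).
    split; [auto|split; auto].
Qed.

Lemma C5_Pt a b al be m M x r : cc a b al be <> 0 -> 0 < x ->
  (C5 a b al be m M (Pt a b al be x r) <->
   if Rlt_dec 0 b then Jo b m M r else (1 + (b - M) * r <= 0 /\ 0 <= 1 + (b - m) * r)).
Proof.
  intros hc hx. unfold C5. destruct (Rlt_dec 0 b).
  - apply Cint_Pt; auto.
  - rewrite !Lam_Pt by auto. unfold Pt at 1. simpl. split.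
    + intros [_ [h1 h2]]. split.
      * apply (Rmult_le_reg_l x); auto. rewrite Rmult_0_r. lra.
      * apply (Rmult_le_reg_l x); auto. rewrite Rmult_0_r. lra.
    + intros [h1 h2]. split; [auto|split]; nra.
Qed.

Lemma pre5 a b al be umin umax : umin < 0 -> 0 < umax -> al <> 0 -> b <> 0 -> cc a b al be <> 0 ->
  pre_control_set a b al be umin umax (C5 a b al be (wmin al umin umax) (wmax al umin umax)).
Proof.
  intros hmin hmax hal hb hc.
  set (m := wmin al umin umax) in *. set (M := wmax al umin umax) in *.
  assert (hm : m < 0) by (apply wmin_neg; auto). assert (hM : 0 < M) by (apply wmax_pos; auto).
  assert (hu : umin <= umax) by lra.
  assert (C5x : forall p, C5 a b al be m M p -> 0 < fst p) by (intros p; unfold C5; destruct (Rlt_dec 0 b); intros [h _]; auto).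
  split; [|split].
  - intros p hp. apply C5x; auto.
  - intros p hp. assert (hx := C5x p hp).
    set (x0 := fst p) in *. set (r0 := Zf a b al be p / fst p).
    assert (hpP : C5 a b al be m M (Pt a b al be x0 r0)) by (unfold x0, r0; rewrite Pt_id; auto).
    apply (C5_Pt a b al be m M x0 r0 hc hx) in hpP.
    assert (hr : r0 <> 0 /\ m <= b + 1 / r0 <= M).
    { destruct (Rlt_dec 0 b) as [bp|bn].
      - destruct hpP as [J1 J2]. assert (h1 : 0 < 1 + (b - M) * r0) by nra. assert (h2 : 1 + (b - m) * r0 < 0) by nra.
        assert (r0n : r0 < 0) by nra. split; [lra|].
        assert (E : r0 * (1 / r0) = 1) by (field; lra).
        split; nra.
      - destruct hpP as [h1 h2]. assert (bn' : b < 0) by (destruct (Rlt_or_le b 0) as [h|h]; [auto|exfalso; destruct h as [h|h]; [lra|apply hb; auto]]).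
        assert (r0p : 0 < r0) by nra. split; [lra|].
        assert (E : r0 * (1 / r0) = 1) by (field; lra).
        split; nra. }
    destruct hr as [hr0 hw].
    set (w0 := b + 1 / r0) in *.
    assert (hwb : w0 - b <> 0).
    { unfold w0. replace (b + 1 / r0 - b) with (1 / r0) by ring. intro e.
      assert (r0 * (1 / r0) = 1) by (field; auto). rewrite e in H. lra. }
    assert (hrw : 1 / (w0 - b) = r0) by (replace (w0 - b) with (1 / r0) by (unfold w0; ring); field; auto).
    destruct (flow5 a b al be umin umax w0 x0 r0 hu hal hb hc hw hwb) as [A S].
    assert (hP : Pt a b al be x0 r0 = p) by (unfold x0, r0; apply Pt_id; auto).
    rewrite hP in S.
    eexists; eexists; split; [exact A|split; [exact S|]].
    intros t ht. cbv beta. rewrite hrw. replace (r0 + (r0 - r0) * exp ((b - w0) * t)) with r0 by ring.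
    apply (C5_Pt a b al be m M); auto.
    apply Rmult_lt_0_compat; auto; apply exp_pos.
  - intros p hp q hq. assert (hx := C5x p hp). assert (hqx := C5x q hq).
    destruct (classic (Cint a b al be m M q)) as [hqi|hqn].
    + apply orbit_closure; [|unfold inG; auto]. apply ctrl5; auto.
      destruct (Rlt_dec 0 b) as [bp|bn]; [right; unfold C5 in hp; destruct (Rlt_dec 0 b); [auto|lra]|left].
      destruct (Rlt_or_le b 0) as [h|h]; [auto|exfalso; destruct h as [h|h]; [lra|apply hb; auto]].
    + assert (bn : b < 0).
      { destruct (Rlt_or_le b 0) as [h|h]; [auto|exfalso]. destruct h as [h|h]; [|apply hb; auto].
        apply hqn. unfold C5 in hq. destruct (Rlt_dec 0 b); [auto|lra]. }
      unfold C5 in hq. destruct (Rlt_dec 0 b) as [bp|_]; [lra|]. destruct hq as [_ [hq1 hq2]].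
      set (ra := 1 / (M / 2 - b)).
      assert (Ja : Jo b m M ra) by (apply Jo_rw; nra).
      set (qs := Pt a b al be (fst q) ra).
      assert (hqs : Cint a b al be m M qs) by (apply Cint_Pt; auto).
      destruct hqs as [_ [hs1 hs2]].
      split; [unfold inG; auto|]. intros e he.
      set (D := snd qs - snd q).
      assert (hD : 0 <= Rabs D) by apply Rabs_pos.
      set (s := Rmin 1 (e / (2 * (Rabs D + 1)))).
      assert (hs0 : 0 < s) by (apply Rmin_pos; [lra|apply Rdiv_lt_0_compat; lra]).
      assert (hs1' : s <= 1) by apply Rmin_l.
      assert (hs2' : s <= e / (2 * (Rabs D + 1))) by apply Rmin_r.
      set (q' := (fst q, (1 - s) * snd q + s * snd qs)).
      assert (aff : forall w, Lam a b al be w q' = (1 - s) * Lam a b al be w q + s * Lam a b al be w qs).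
      { intros w. unfold q', qs, Lam, Zf, Pt. simpl. unfold Rdiv. ring. }
      assert (hq' : Cint a b al be m M q').
      { split; [unfold q'; simpl; auto|]. rewrite !aff.
        replace (b * ((1 - s) * Lam a b al be M q + s * Lam a b al be M qs)) with
          ((1 - s) * (b * Lam a b al be M q) + s * (b * Lam a b al be M qs)) by ring.
        replace (b * ((1 - s) * Lam a b al be m q + s * Lam a b al be m qs)) with
          ((1 - s) * (b * Lam a b al be m q) + s * (b * Lam a b al be m qs)) by ring.
        assert (0 <= b * Lam a b al be M q) by nra. assert (b * Lam a b al be m q <= 0) by nra.
        assert (0 <= (1 - s) * (b * Lam a b al be M q)) by (apply Rmult_le_pos; lra).
        assert ((1 - s) * (b * Lam a b al be m q) <= 0) by nra.
        assert (0 < s * (b * Lam a b al be M qs)) by (apply Rmult_lt_0_compat; lra).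
        assert (s * (b * Lam a b al be m qs) < 0) by nra.
        split; lra. }
      exists q'. split.
      * apply ctrl5; auto.
      * assert (E1 : snd q' - snd q = s * D) by (unfold q', D; simpl; ring).
        assert (E2 : dist2 q' q = Rabs (snd q' - snd q)).
        { unfold q'. destruct q as [qx qy]. simpl. apply dist2_vert. }
        rewrite E2, E1, Rabs_mult, (Rabs_right s) by lra.
        assert (s * Rabs D <= e / (2 * (Rabs D + 1)) * Rabs D) by (apply Rmult_le_compat_r; auto).
        assert (e / (2 * (Rabs D + 1)) * Rabs D < e).
        { apply (Rmult_lt_reg_r (2 * (Rabs D + 1))); [lra|]. field_simplify; [|lra]. nra. }
        lra.
Qed.



Lemma pos_open f K q : lipf f K -> 0 < f q -> exists r, 0 < r /\ forall s, dist2 s q < r -> 0 < f s.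
Proof.
  intros [hK hf] hq. exists (f q / (K + 1)). split; [apply Rdiv_lt_0_compat; lra|].
  intros s hs. assert (B := hf s q).
  assert (B2 : f q - f s <= K * dist2 s q).
  { replace (f q - f s) with (- (f s - f q)) by ring. eapply Rle_trans; [apply Rle_abs|]. rewrite Rabs_Ropp; auto. }
  assert (hd := dist2_pos s q).
  assert (C : K * dist2 s q <= K * (f q / (K + 1))) by (apply Rmult_le_compat_l; lra).
  assert (E : K * (f q / (K + 1)) < f q).
  { apply Rmult_lt_reg_r with (K + 1); [lra|]. field_simplify; [|lra]. nra. }
  lra.
Qed.

Lemma strict_ball al' be' ga q r : 0 < r -> be' <> 0 ->
  (forall s, dist2 s q < r -> 0 <= lin al' be' ga s) -> 0 < lin al' be' ga q.
Proof.
  intros hr hb H. destruct q as [x y].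
  destruct (Rlt_or_le 0 be') as [bp|bn].
  - assert (K := H (x, y - r / 2) ltac:(rewrite dist2_vert; rewrite Rabs_left by lra; lra)).
    unfold lin in *. simpl in *. nra.
  - assert (bn' : be' < 0) by (destruct bn; auto; contradiction).
    assert (K := H (x, y + r / 2) ltac:(rewrite dist2_vert; rewrite Rabs_right by lra; lra)).
    unfold lin in *. simpl in *. nra.
Qed.

Lemma lipf_scal (f : pt -> R) c al' be' ga : (forall p, f p = lin al' be' ga p) ->
  lipf (fun p => c * f p) (Rabs (c * al') + Rabs (c * be')).
Proof.
  intros e. eapply lipf_ext; [|apply (lin_lipf (c * al') (c * be') (c * ga))]. intros p. rewrite e. unfold lin. ring.
Qed.

Lemma I1 a b al be m M q : al <> 0 -> b <> 0 -> cc a b al be <> 0 -> m < 0 -> 0 < M ->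
  (interior2 (C5 a b al be m M) q <-> Cint a b al be m M q).
Proof.
  intros hal hb hc hm hM. split.
  - intros [r [hr H]].
    assert (hq : C5 a b al be m M q) by (apply H; rewrite dist2_refl; auto).
    unfold C5 in hq. destruct (Rlt_dec 0 b) as [bp|bn]; [auto|].
    assert (bn' : b < 0) by (destruct (Rlt_or_le b 0) as [h|h]; [auto|exfalso; destruct h as [h|h]; [lra|apply hb; auto]]).
    destruct hq as [hx [h1 h2]].
    assert (S1 : 0 < - Lam a b al be M q).
    { assert (L : forall p, - Lam a b al be M p = lin (- (1 + (b - M) * ZA a b al be)) (- ((b - M) * ZB a b al be)) (- ((b - M) * ZC a b al be)) p)
        by (intros p; rewrite Lam_lin'; unfold lin; ring).
      rewrite L. apply (strict_ball _ _ _ q r hr).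
      - unfold ZB. intro e. assert (e' : (b - M) * (1 / cc a b al be) = 0) by lra.
        apply Rmult_integral in e'. destruct e' as [e'|e']; [lra|]. unfold Rdiv in e'. rewrite Rmult_1_l in e'.
        apply (Rinv_neq_0_compat _ hc); auto.
      - intros s hs. rewrite <- L. assert (K := H s hs). unfold C5 in K. destruct (Rlt_dec 0 b); [lra|]. lra. }
    assert (S2 : 0 < Lam a b al be m q).
    { destruct (Req_dec b m) as [e|ne].
      - unfold Lam. rewrite e. lra.
      - rewrite Lam_lin'. apply (strict_ball _ _ _ q r hr).
        + unfold ZB. intro e. apply Rmult_integral in e. destruct e as [e|e]; [lra|]. unfold Rdiv in e. rewrite Rmult_1_l in e.
          apply (Rinv_neq_0_compat _ hc); auto.
        + intros s hs. rewrite <- Lam_lin'. assert (K := H s hs). unfold C5 in K. destruct (Rlt_dec 0 b); [lra|]. lra. }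
    split; [auto|split; nra].
  - intros [hx [h1 h2]].
    destruct (pos_open (lin 1 0 0) _ q (lin_lipf 1 0 0) ltac:(unfold lin; lra)) as [r1 [hr1 H1]].
    destruct (pos_open _ _ q (lipf_scal _ b _ _ _ (Lam_lin' a b al be M)) h1) as [r2 [hr2 H2]].
    destruct (pos_open _ _ q (lipf_scal _ (-b) _ _ _ (Lam_lin' a b al be m)) ltac:(lra)) as [r3 [hr3 H3]].
    exists (Rmin r1 (Rmin r2 r3)). split; [apply Rmin_pos; auto; apply Rmin_pos; auto|].
    intros s hs.
    assert (d1 : dist2 s q < r1) by (eapply Rlt_le_trans; [apply hs|apply Rmin_l]).
    assert (d2 : dist2 s q < r2) by (eapply Rlt_le_trans; [apply hs|eapply Rle_trans; [apply Rmin_r|apply Rmin_l]]).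
    assert (d3 : dist2 s q < r3) by (eapply Rlt_le_trans; [apply hs|eapply Rle_trans; [apply Rmin_r|apply Rmin_r]]).
    assert (k1 := H1 s d1). assert (k2 := H2 s d2). assert (k3 := H3 s d3). unfold lin in k1. simpl in k2, k3.
    unfold C5. destruct (Rlt_dec 0 b) as [bp|bn].
    + split; [lra|split; lra].
    + assert (bn' : b < 0) by (destruct (Rlt_or_le b 0) as [h|h]; [auto|exfalso; destruct h as [h|h]; [lra|apply hb; auto]]).
      split; [lra|split; nra].
Qed.

Lemma snd_decomp a b al be q : al <> 0 -> b <> 0 -> cc a b al be <> 0 -> snd q = a / b + be / al * fst q + cc a b al be * Zf a b al be q.
Proof. intros h1 h2 h. unfold Zf. field. repeat split; auto. Qed.

Lemma sgn1 b X Y : b * Y < 0 -> X < 0 -> 0 < b * (X / Y).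
Proof.
  intros h1 h2. assert (hY : Y <> 0) by (intro e; rewrite e in h1; lra).
  replace (b * (X / Y)) with (X * (b * Y) / (Y * Y)) by (field; auto).
  apply Rdiv_lt_0_compat; [nra|]. apply Rsqr_pos_lt; auto.
Qed.
Lemma sgn2 b X Y : b * Y < 0 -> 0 < X -> b * (X / Y) < 0.
Proof.
  intros h1 h2. assert (hY : Y <> 0) by (intro e; rewrite e in h1; lra).
  replace (b * (X / Y)) with (- (X * (- (b * Y)) / (Y * Y))) by (field; auto).
  assert (0 < X * (- (b * Y)) / (Y * Y)); [|lra].
  apply Rdiv_lt_0_compat; [nra|]. apply Rsqr_pos_lt; auto.
Qed.

Definition Sset (v1 v2 : pt) a b (q : pt) := exists s t, 0 < s /\ 0 < t /\
   q = (s * fst v1 + t * fst v2, a / b + s * snd v1 + t * snd v2).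

Lemma caseA a b al be m M q : al <> 0 -> b <> 0 -> cc a b al be <> 0 -> m < M -> b * (m - b) < 0 -> b * (M - b) < 0 ->
  (Cint a b al be m M q <-> Sset (1, be / al + cc a b al be * (1 / (M - b))) (1, be / al + cc a b al be * (1 / (m - b))) a b q).
Proof.
  intros hal hb hc hmM h1 h2.
  assert (mb : m - b <> 0) by (intro e; rewrite e in h1; lra).
  assert (Mb : M - b <> 0) by (intro e; rewrite e in h2; lra).
  assert (hbb : 0 < b * b) by (apply Rsqr_pos_lt; auto).
  split.
  - intros [hx [k1 k2]]. destruct q as [x y]. simpl in hx.
    assert (Ey := snd_decomp a b al be (x, y) hal hb hc). simpl in Ey.
    set (Z := Zf a b al be (x, y)) in *.
    assert (LM : Lam a b al be M (x, y) = x + (b - M) * Z) by (unfold Lam; auto).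
    assert (Lm : Lam a b al be m (x, y) = x + (b - m) * Z) by (unfold Lam; auto).
    rewrite LM in k1. rewrite Lm in k2.
    exists ((x + (b - m) * Z) * (M - b) / (M - m)), ((x + (b - M) * Z) * (m - b) / (m - M)).
    split; [|split].
    + apply Rdiv_lt_0_compat; [|lra].
      assert (0 < (b * (x + (b - m) * Z)) * (b * (M - b))) by nra. nra.
    + replace ((x + (b - M) * Z) * (m - b) / (m - M)) with (- ((x + (b - M) * Z) * (m - b)) / (M - m)) by (field; lra).
      apply Rdiv_lt_0_compat; [|lra].
      assert ((b * (x + (b - M) * Z)) * (b * (m - b)) < 0) by nra. nra.
    + simpl. f_equal; [field; lra|]. rewrite Ey. field. repeat split; auto; lra.
  - intros [s [t [hs [ht e]]]]. subst q. simpl.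
    assert (LM : Lam a b al be M (s * 1 + t * 1, a / b + s * (be / al + cc a b al be * (1 / (M - b))) + t * (be / al + cc a b al be * (1 / (m - b))))
                 = t * ((m - M) / (m - b))) by (unfold Lam, Zf; simpl; field; repeat split; auto).
    assert (Lm : Lam a b al be m (s * 1 + t * 1, a / b + s * (be / al + cc a b al be * (1 / (M - b))) + t * (be / al + cc a b al be * (1 / (m - b))))
                 = s * ((M - m) / (M - b))) by (unfold Lam, Zf; simpl; field; repeat split; auto).
    split; [simpl; lra|]. rewrite LM, Lm. split.
    + assert (K := sgn1 b (m - M) (m - b) h1 ltac:(lra)). nra.
    + assert (K := sgn2 b (M - m) (M - b) h2 ltac:(lra)). nra.
Qed.

Lemma caseB a b al be m M q : al <> 0 -> b <> 0 -> cc a b al be <> 0 -> m < 0 -> 0 < b -> b <= M ->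
  (Cint a b al be m M q <-> Sset (1, be / al + cc a b al be * (1 / (m - b))) (0, - cc a b al be) a b q).
Proof.
  intros hal hb hc hm bp bM.
  assert (mb : m - b <> 0) by lra. assert (bm' : b - m <> 0) by lra.
  split.
  - intros [hx [k1 k2]]. destruct q as [x y]. simpl in hx.
    assert (Ey := snd_decomp a b al be (x, y) hal hb hc). simpl in Ey.
    set (Z := Zf a b al be (x, y)) in *.
    assert (Lm : Lam a b al be m (x, y) = x + (b - m) * Z) by (unfold Lam; auto).
    rewrite Lm in k2.
    exists x, ((x + (b - m) * Z) / (m - b)). split; [auto|split].
    + replace ((x + (b - m) * Z) / (m - b)) with (- (x + (b - m) * Z) / (b - m)) by (field; lra).
      apply Rdiv_lt_0_compat; [|lra]. nra.
    + simpl. f_equal; [ring|]. rewrite Ey. field. repeat split; auto; lra.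
  - intros [s [t [hs [ht e]]]]. subst q. simpl.
    assert (Lm : Lam a b al be m (s * 1 + t * 0, a / b + s * (be / al + cc a b al be * (1 / (m - b))) + t * - cc a b al be)
                 = - (b - m) * t) by (unfold Lam, Zf; simpl; field; repeat split; auto).
    assert (LM : Lam a b al be M (s * 1 + t * 0, a / b + s * (be / al + cc a b al be * (1 / (m - b))) + t * - cc a b al be)
                 = s * ((M - m) / (b - m)) + (M - b) * t) by (unfold Lam, Zf; simpl; field; repeat split; auto).
    split; [simpl; lra|]. rewrite LM, Lm. split.
    + assert (0 < (M - m) / (b - m)) by (apply Rdiv_lt_0_compat; lra).
      assert (0 <= (M - b) * t) by (apply Rmult_le_pos; lra).
      assert (0 < s * ((M - m) / (b - m))) by (apply Rmult_lt_0_compat; lra).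
      apply Rmult_lt_0_compat; lra.
    + assert (0 < (b - m) * t) by (apply Rmult_lt_0_compat; lra). nra.
Qed.

Lemma caseC a b al be m M q : al <> 0 -> b <> 0 -> cc a b al be <> 0 -> 0 < M -> b < 0 -> m <= b ->
  (Cint a b al be m M q <-> Sset (1, be / al + cc a b al be * (1 / (M - b))) (0, cc a b al be) a b q).
Proof.
  intros hal hb hc hM bn mb.
  assert (Mb : M - b <> 0) by lra.
  split.
  - intros [hx [k1 k2]]. destruct q as [x y]. simpl in hx.
    assert (Ey := snd_decomp a b al be (x, y) hal hb hc). simpl in Ey.
    set (Z := Zf a b al be (x, y)) in *.
    assert (LM : Lam a b al be M (x, y) = x + (b - M) * Z) by (unfold Lam; auto).
    rewrite LM in k1.
    exists x, ((x + (b - M) * Z) / (b - M)). split; [auto|split].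
    + replace ((x + (b - M) * Z) / (b - M)) with (- (x + (b - M) * Z) / (M - b)) by (field; lra).
      apply Rdiv_lt_0_compat; [|lra]. nra.
    + simpl. f_equal; [ring|]. rewrite Ey. field. repeat split; auto; lra.
  - intros [s [t [hs [ht e]]]]. subst q. simpl.
    assert (LM : Lam a b al be M (s * 1 + t * 0, a / b + s * (be / al + cc a b al be * (1 / (M - b))) + t * cc a b al be)
                 = (b - M) * t) by (unfold Lam, Zf; simpl; field; repeat split; auto).
    assert (Lm : Lam a b al be m (s * 1 + t * 0, a / b + s * (be / al + cc a b al be * (1 / (M - b))) + t * cc a b al be)
                 = s * ((M - m) / (M - b)) + (b - m) * t) by (unfold Lam, Zf; simpl; field; repeat split; auto).
    split; [simpl; lra|]. rewrite LM, Lm. split.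
    + assert (0 < (M - b) * t) by (apply Rmult_lt_0_compat; lra). nra.
    + assert (0 < (M - m) / (M - b)) by (apply Rdiv_lt_0_compat; lra).
      assert (0 <= (b - m) * t) by (apply Rmult_le_pos; lra).
      assert (0 < s * ((M - m) / (M - b))) by (apply Rmult_lt_0_compat; lra). nra.
Qed.

Lemma part5 (umin umax a b al be : R) (humin : umin < 0) (humax : 0 < umax) :
  al * (a * al + b * be) <> 0 -> b <> 0 ->
     exists C, is_control_set a b al be umin umax C /\
       (forall D, is_control_set a b al be umin umax D -> set_eq D C) /\
       exists v1 v2 : pt,
         fst v1 * snd v2 - snd v1 * fst v2 <> 0 /\
         let S := fun q : pt => exists s t, 0 < s /\ 0 < t /\
                    q = (s * fst v1 + t * fst v2, a / b + s * snd v1 + t * snd v2) in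
         set_eq (interior2 C) S /\ (forall q, S q -> 0 < fst q).
Proof.
  intros h hb.
  assert (hal : al <> 0) by (intro e; apply h; rewrite e; ring).
  assert (hcc0 : a * al + b * be <> 0) by (intro e; apply h; rewrite e; ring).
  assert (hc : cc a b al be <> 0).
  { intro e. apply hcc0. unfold cc in e. replace (a * al + b * be) with (al * (a + b * be / al)) by (field; auto). rewrite e. ring. }
  set (m := wmin al umin umax). set (M := wmax al umin umax).
  assert (hm : m < 0) by (apply wmin_neg; auto). assert (hM : 0 < M) by (apply wmax_pos; auto).
  exists (C5 a b al be m M).
  destruct (unique_cs a b al be umin umax (C5 a b al be m M) (pre5 a b al be umin umax humin humax hal hb hc)
     (all5 a b al be umin umax humin humax hal hb hc)) as [H1 H2].
  split; [exact H1|split; [exact H2|]].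
  assert (pos : forall v1 v2 q, Sset v1 v2 a b q -> fst v1 = 1 -> 0 <= fst v2 -> 0 < fst q).
  { intros v1 v2 q [s [t [hs [ht e]]]] h1 h2. subst q. simpl. rewrite h1.
    assert (0 <= t * fst v2) by (apply Rmult_le_pos; lra). lra. }
  destruct (Rlt_or_le 0 b) as [bp|bn].
  - destruct (Rlt_or_le M b) as [bM|bM].
    + exists (1, be / al + cc a b al be * (1 / (M - b))), (1, be / al + cc a b al be * (1 / (m - b))).
      split.
      * simpl. replace (1 * (be / al + cc a b al be * (1 / (m - b))) - (be / al + cc a b al be * (1 / (M - b))) * 1)
          with (cc a b al be * ((M - m) / ((m - b) * (M - b)))) by (field; split; lra).
        apply Rmult_integral_contrapositive_currified; auto. unfold Rdiv.
        apply Rmult_integral_contrapositive_currified; [lra|]. apply Rinv_neq_0_compat.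
        apply Rmult_integral_contrapositive_currified; lra.
      * intros S. split.
        -- intros q. rewrite I1 by auto. apply caseA; auto; try lra; nra.
        -- intros q hq. apply (pos _ _ q hq); simpl; lra.
    + exists (1, be / al + cc a b al be * (1 / (m - b))), (0, - cc a b al be).
      split.
      * simpl. replace (1 * - cc a b al be - (be / al + cc a b al be * (1 / (m - b))) * 0) with (- cc a b al be) by ring.
        apply Ropp_neq_0_compat; auto.
      * intros S. split.
        -- intros q. rewrite I1 by auto. apply caseB; auto.
        -- intros q hq. apply (pos _ _ q hq); simpl; lra.
  - assert (bn' : b < 0) by (destruct bn as [h'|h']; [auto|exfalso; apply hb; auto]).
    destruct (Rlt_or_le b m) as [bm|bm].
    + exists (1, be / al + cc a b al be * (1 / (M - b))), (1, be / al + cc a b al be * (1 / (m - b))).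
      split.
      * simpl. replace (1 * (be / al + cc a b al be * (1 / (m - b))) - (be / al + cc a b al be * (1 / (M - b))) * 1)
          with (cc a b al be * ((M - m) / ((m - b) * (M - b)))) by (field; split; lra).
        apply Rmult_integral_contrapositive_currified; auto. unfold Rdiv.
        apply Rmult_integral_contrapositive_currified; [lra|]. apply Rinv_neq_0_compat.
        apply Rmult_integral_contrapositive_currified; lra.
      * intros S. split.
        -- intros q. rewrite I1 by auto. apply caseA; auto; try lra; nra.
        -- intros q hq. apply (pos _ _ q hq); simpl; lra.
    + exists (1, be / al + cc a b al be * (1 / (M - b))), (0, cc a b al be).
      split.
      * simpl. replace (1 * cc a b al be - (be / al + cc a b al be * (1 / (M - b))) * 0) with (cc a b al be) by ring. auto.
      * intros S. split.
        -- intros q. rewrite I1 by auto. apply caseC; auto.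
        -- intros q hq. apply (pos _ _ q hq); simpl; lra.
Qed.

Theorem mainTheorem11 (umin umax a b al be : R)
  (humin : umin < 0) (humax : 0 < umax)
  (hab : a <> 0 \/ b <> 0) (halbe : al <> 0 \/ be <> 0) :
  (* 1 *)
  (al = 0 -> a * al + b * be = 0 ->
     exists eps, 0 < eps /\ forall x, 1 - eps < x < 1 + eps ->
       is_control_set a b al be umin umax (fun p => fst p = x)) /\
  (* 2 *)
  (al = 0 -> a * al + b * be <> 0 ->
     forall x, 0 < x ->
       exists I : R -> Prop,
         is_interval I /\
         (exists M, forall y, I y -> Rabs y <= M) /\
         (exists y0 r, 0 < r /\ forall y, Rabs (y - y0) < r -> I y) /\
         I (- a / b * (x - 1)) /\
         is_control_set a b al be umin umax (fun p => fst p = x /\ I (snd p))) /\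
  (* 3 *)
  (al <> 0 -> a * al + b * be = 0 ->
     let L := fun p : pt => 0 < fst p /\ snd p = be / al * (fst p - 1) in
     is_control_set a b al be umin umax L /\
     forall C, is_control_set a b al be umin umax C -> set_eq C L) /\
  (* 4 *)
  (al * (a * al + b * be) <> 0 -> b = 0 ->
     is_control_set a b al be umin umax inG /\
     forall C, is_control_set a b al be umin umax C -> set_eq C inG) /\
  (* 5 *)
  (al * (a * al + b * be) <> 0 -> b <> 0 ->
     exists C, is_control_set a b al be umin umax C /\
       (forall D, is_control_set a b al be umin umax D -> set_eq D C) /\
       exists v1 v2 : pt,
         fst v1 * snd v2 - snd v1 * fst v2 <> 0 /\
         let S := fun q : pt => exists s t, 0 < s /\ 0 < t /\
                    q = (s * fst v1 + t * fst v2, a / b + s * snd v1 + t * snd v2) in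
         set_eq (interior2 C) S /\ (forall q, S q -> 0 < fst q)).
Proof.
  split; [|split; [|split; [|split]]].
  - apply part1; auto.
  - intros h1 h2. apply part2; auto.
  - apply part3; auto.
  - apply part4; auto.
  - apply part5; auto.
Qed.
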